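(* Let $\varphi$ be a non-degenerate computable forecasting system and let $\omega\in\Omega$. Then $\omega$ is Martin-Löf random for $\varphi$ if and only if $\omega$ is Martin-Löf test random for $\varphi$.
   Context: Notation: $\mathbb N_0=\{0,1,2,\dots\}$; $\Omega=\{0,1\}^{\mathbb N}$ is the set of paths $\omega=(\omega_1,\omega_2,\dots)$; $\mathbb S=\bigcup_{n\in\mathbb N_0}\{0,1\}^n$ is the set of situations (finite binary strings), $\square$ the empty string, $|s|$ the length of $s$, $\omega^n=(\omega_1,\dots,\omega_n)$ with $\omega^0=\square$, and $sx$ the concatenation of $s$ with $x\in\{0,1\}$. The cylinder set of $s$ is $[s]=\{\omega\in\Omega:\omega^{|s|}=s\}$ and $[A]=\bigcup_{s\in A}[s]$ for $A\subseteq\mathbb S$. For $A\subseteq\mathbb N_0\times\mathbb S$ and $n\in\mathbb N_0$, $A_n=\{s\in\mathbb S:(n,s)\in A\}$. Forecasts: $\mathcal I$ is the set of nonempty closed subintervals of $[0,1]$; for $I\in\mathcal I$ and $f:\{0,1\}\to\mathbb R$, $\overline E_I(f)=\max_{p\in I}[pf(1)+(1-p)f(0)]$. A forecasting system is a map $\varphi:\mathbb S\to\mathcal I$; write $\underline\varphi(s)=\min\varphi(s)$, $\overline\varphi(s)=\max\varphi(s)$. It is non-degenerate if $\underline\varphi(s)<1$ and $\overline\varphi(s)>0$ for all $s\in\mathbb S$. A supermartingale for $\varphi$ is a map $M:\mathbb S\to\mathbb R$ with $\overline E_{\varphi(s)}(M(s\,\cdot))\le M(s)$ for all $s$, where $M(s\,\cdot)$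 is the map $x\mapsto M(sx)$. A test supermartingale is a non-negative supermartingale with $M(\square)=1$. Global upper probability: for $G\subseteq\Omega$, $\overline P_\varphi(G)=\inf\{M(\square): M\text{ supermartingale for }\varphi,\ \liminf_{n\to\infty}M(\omega^n)\ge \mathbb 1_G(\omega)\text{ for all }\omega\in\Omega\}$. Computability: elements of countable sets such as $\mathbb N_0,\mathbb S,\mathbb Q$ and their products are encoded by natural numbers; recursive maps and recursive/recursively enumerable sets are as usual. A real map $r:\mathcal D\to\mathbb R$ is lower semicomputable if there is a recursive $q:\mathcal D\times\mathbb N_0\to\mathbb Q$ with $q(d,n+1)\ge q(d,n)$ and $\lim_n q(d,n)=r(d)$ for all $d$; upper semicomputable if $-r$ is lower semicomputable; computable if both (equivalently, there is a recursive $q:\mathcal D\times\mathbb N_0\to\mathbb Q$ with $|r(d)-q(d,N)|\le2^{-N}$ for all $d,N$). $\varphi$ is computable if $\underline\varphi$ and $\overline\varphi$ are computable real maps on $\mathbb S$. Martin-Löf randomness: $\omega$ is Martin-Löf random for $\varphi$ if every lower semicomputable test supermartingale $T$ for $\varphi$ satisfies $\sup_{n\in\mathbb N_0}T(\omega^n)<\infty$. A Martin-Löf test for $\varphi$ is a recursively enumerable set $A\subseteq\mathbb N_0\times\mathbb S$ with $\overline P_\varphi([A_n])\le2^{-n}$ for all $n\in\mathbb N_0$. $\omega$ is Martin-Löf test random for $\varphi$ if $\omega\notin\bigcap_{n\in\mathbb N_0}[A_n]$ for every Martin-Löf test $A$ for $\varphi$. *)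

(* Defs.v *)
From Stdlib Require Import Reals Lra List Arith ClassicalDescription.
From Coquelicot Require Import Coquelicot.
Import ListNotations.
Open Scope R_scope.

(* Cantor pairing and its inverse (enumeration of N x N along diagonals) *)
Definition npair (a b : nat) : nat := ((a + b) * (a + b + 1)) / 2 + b.

Fixpoint nunpair (n : nat) : nat * nat :=
  match n with
  | O => (O, O)
  | S n' => let (a, b) := nunpair n' in
            match a with O => (S b, O) | S a' => (a', S b) end
  end.

Inductive prcode : Type :=
  | PZero
  | PSucc
  | PId
  | PFst
  | PSnd
  | PComp (f g : prcode)
  | PPair (f g : prcode)
  | PRec (f g : prcode)         (* h <y,0> = f y ; h <y,n+1> = g <y,<n,h <y,n>>> *)
  | PMu (f : prcode).           (* x |-> least n with f <x,n> = 0 (all earlier defined) *)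

Fixpoint peval (k : nat) (c : prcode) (x : nat) {struct k} : option nat :=
  match k with
  | O => None
  | S k' =>
    match c with
    | PZero => Some O
    | PSucc => Some (S x)
    | PId => Some x
    | PFst => Some (fst (nunpair x))
    | PSnd => Some (snd (nunpair x))
    | PComp f g => match peval k' g x with
                   | Some y => peval k' f y | None => None end
    | PPair f g => match peval k' f x, peval k' g x with
                   | Some a, Some b => Some (npair a b) | _, _ => None end
    | PRec f g => let (y, n) := nunpair x in
                  match n with
                  | O => peval k' f y
                  | S n' => match peval k' (PRec f g) (npair y n') with
                            | Some r => peval k' g (npair y (npair n' r))
                            | None => None end
                  end
    | PMu f => let fix loop (j i : nat) : option nat :=
                   match j with
                   | O => None
                   | S j' => match peval k' f (npair x i) with
                             | Some O => Some i
                             | Some (S _) => loop j' (S i)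
                             | None => None end
                   end in loop k' O
    end
  end.

Definition recursive (g : nat -> nat) : Prop :=
  exists c : prcode, forall x, exists k, peval k c x = Some (g x).

(* Situations: finite binary strings; paths: infinite binary sequences.
   The path omega = (omega_1, omega_2, ...) is represented by w with
   w k = omega_(k+1). *)
Definition situation := list bool.
Definition path := nat -> bool.

Fixpoint prefix (w : path) (n : nat) : situation :=
  match n with O => [] | S n' => prefix w n' ++ [w n'] end.

(* bijective encoding of situations by natural numbers *)
Fixpoint encS (s : situation) : nat :=
  match s with
  | [] => O
  | b :: s' => 2 * encS s' + 1 + (if b then 1 else 0)
  end%nat.

(* decoding of natural numbers into rationals (viewed as reals):
   n = <a,b> |-> z(a) / (b+1), z the standard numbering of Z *)
Definition decZ (a : nat) : R :=
  if Nat.even a then INR (a / 2) else - INR ((a + 1) / 2).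
Definition decQ (n : nat) : R :=
  decZ (fst (nunpair n)) / INR (S (snd (nunpair n))).

Definition lower_semicomputable (r : situation -> R) : Prop :=
  exists g : nat -> nat, recursive g /\
    forall s : situation,
      (forall n, decQ (g (npair (encS s) n)) <= decQ (g (npair (encS s) (S n)))) /\
      is_lim_seq (fun n => decQ (g (npair (encS s) n))) (Finite (r s)).

Definition upper_semicomputable (r : situation -> R) : Prop :=
  lower_semicomputable (fun s => - r s).

Definition computable (r : situation -> R) : Prop :=
  lower_semicomputable r /\ upper_semicomputable r.

Record forecasting_system := {
  fs_lo : situation -> R;
  fs_hi : situation -> R;
  fs_lo_ge0 : forall s, 0 <= fs_lo s;
  fs_lo_le_hi : forall s, fs_lo s <= fs_hi s;
  fs_hi_le1 : forall s, fs_hi s <= 1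
}.

Definition non_degenerate (phi : forecasting_system) : Prop :=
  forall s, fs_lo phi s < 1 /\ 0 < fs_hi phi s.

Definition computable_fs (phi : forecasting_system) : Prop :=
  computable (fs_lo phi) /\ computable (fs_hi phi).

Definition upper_exp (lo hi : R) (f : bool -> R) : Rbar :=
  Lub_Rbar (fun v => exists p, lo <= p <= hi /\ v = p * f true + (1 - p) * f false).

Definition supermartingale (phi : forecasting_system) (M : situation -> R) : Prop :=
  forall s, Rbar_le (upper_exp (fs_lo phi s) (fs_hi phi s) (fun x => M (s ++ [x])))
                    (Finite (M s)).

Definition test_supermartingale (phi : forecasting_system) (M : situation -> R) : Prop :=
  supermartingale phi M /\ (forall s, 0 <= M s) /\ M [] = 1.

Definition indicator (G : path -> Prop) (w : path) : R :=
  match excluded_middle_informative (G w) with left _ => 1 | right _ => 0 end.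

Definition upper_prob (phi : forecasting_system) (G : path -> Prop) : Rbar :=
  Glb_Rbar (fun v => exists M, supermartingale phi M /\
              (forall w, Rbar_le (Finite (indicator G w))
                                 (LimInf_seq (fun n => M (prefix w n)))) /\
              v = M []).

Definition cylinder (s : situation) (w : path) : Prop := prefix w (length s) = s.
Definition cylinder_set (A : situation -> Prop) (w : path) : Prop :=
  exists s, A s /\ cylinder s w.

Definition rec_enumerable (A : nat -> situation -> Prop) : Prop :=
  exists h : nat -> nat, recursive h /\
    forall n s, A n s <-> exists k, h (npair (npair n (encS s)) k) = O.

Definition ML_random (phi : forecasting_system) (w : path) : Prop :=
  forall T : situation -> R,
    lower_semicomputable T -> test_supermartingale phi T ->
    exists B : R, forall n, T (prefix w n) <= B.

Definition ML_test (phi : forecasting_system) (A : nat -> situation -> Prop) : Prop :=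
  rec_enumerable A /\
  forall n, Rbar_le (upper_prob phi (cylinder_set (A n))) (Finite (/ 2 ^ n)).

Definition ML_test_random (phi : forecasting_system) (w : path) : Prop :=
  forall A, ML_test phi A -> ~ (forall n, cylinder_set (A n) w).

(* Main.v *)
Require Import Defs.
From Stdlib Require Import Reals Lra Lia List Arith ClassicalDescription Classical.
From Coquelicot Require Import Coquelicot.

Module A1.
Import ListNotations.
Local Open Scope nat_scope.

Definition un1 n := fst (nunpair n).
Definition un2 n := snd (nunpair n).

Lemma npair_next0 b : npair (S b) 0 = S (npair 0 b).
Proof.
  unfold npair. replace (S b + 0) with (b + 1) by lia. replace (0 + b) with b by lia.
  replace ((b + 1) * (b + 1 + 1)) with (b * (b + 1) + (b + 1) * 2) by nia.
  rewrite Nat.div_add by lia. lia.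
Qed.

Lemma npair_nextS a b : npair a (S b) = S (npair (S a) b).
Proof. unfold npair. replace (a + S b) with (S a + b) by lia. lia. Qed.

Lemma unpair_pair_aux d : forall a b, a + b = d -> nunpair (npair a b) = (a, b).
Proof.
  induction d as [|d IH]; intros a b H.
  - assert (a = 0) by lia; assert (b = 0) by lia; subst. reflexivity.
  - induction b as [|b IHb] in a, H |- *.
    + destruct a as [|a]; [lia|]. rewrite npair_next0. simpl.
      rewrite (IH 0 a) by lia. reflexivity.
    + rewrite npair_nextS. simpl. rewrite (IHb (S a)) by lia. reflexivity.
Qed.

Lemma unpair_pair a b : nunpair (npair a b) = (a, b).
Proof. apply (unpair_pair_aux (a + b)); reflexivity. Qed.

Lemma un1_pair a b : un1 (npair a b) = a.
Proof. unfold un1; rewrite unpair_pair; reflexivity. Qed.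
Lemma un2_pair a b : un2 (npair a b) = b.
Proof. unfold un2; rewrite unpair_pair; reflexivity. Qed.

Lemma pair_unpair n : npair (un1 n) (un2 n) = n.
Proof.
  unfold un1, un2. induction n as [|n IH]; [reflexivity|].
  simpl. destruct (nunpair n) as [a b]. simpl in *.
  destruct a as [|a].
  - simpl. rewrite npair_next0. congruence.
  - simpl. rewrite npair_nextS. congruence.
Qed.

End A1.
Import A1.

Module A2.
Import ListNotations.
Local Open Scope nat_scope.

Section ML.
Variable ev : nat -> option nat.
Fixpoint muloop (j i : nat) : option nat :=
  match j with
  | O => None
  | S j' => match ev i with
            | Some O => Some i
            | Some (S _) => muloop j' (S i)
            | None => None end
  end.
End ML.

Lemma peval_mu k f x : peval (S k) (PMu f) x = muloop (fun i => peval k f (npair x i)) k 0.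
Proof. reflexivity. Qed.

Lemma muloop_mono (ev1 ev2 : nat -> option nat) :
  (forall i v, ev1 i = Some v -> ev2 i = Some v) ->
  forall j i v, muloop ev1 j i = Some v -> muloop ev2 (S j) i = Some v.
Proof.
  intros H. induction j as [|j IH]; intros i v E; [discriminate|].
  simpl in E |- *. destruct (ev1 i) as [[|m]|] eqn:E1; try discriminate.
  - rewrite (H _ _ E1). exact E.
  - rewrite (H _ _ E1). apply IH. exact E.
Qed.

Lemma pe_comp k f g x : peval (S k) (PComp f g) x =
  match peval k g x with Some y => peval k f y | None => None end.
Proof. reflexivity. Qed.
Lemma pe_pair k f g x : peval (S k) (PPair f g) x =
  match peval k f x, peval k g x with Some a, Some b => Some (npair a b) | _, _ => None end.
Proof. reflexivity. Qed.
Lemma pe_rec k f g x : peval (S k) (PRec f g) x =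
  let (y, n) := nunpair x in
  match n with
  | O => peval k f y
  | S n' => match peval k (PRec f g) (npair y n') with
            | Some r => peval k g (npair y (npair n' r)) | None => None end
  end.
Proof. reflexivity. Qed.

Lemma peval_S : forall k c x v, peval k c x = Some v -> peval (S k) c x = Some v.
Proof.
  induction k as [|k IH]; intros c x v E; [discriminate|].
  destruct c.
  - exact E.
  - exact E.
  - exact E.
  - exact E.
  - exact E.
  - rewrite pe_comp in E |- *. destruct (peval k c2 x) as [y|] eqn:E1; [|discriminate].
    rewrite (IH _ _ _ E1). apply IH; exact E.
  - rewrite pe_pair in E |- *. destruct (peval k c1 x) as [y|] eqn:E1; [|discriminate].
    destruct (peval k c2 x) as [z|] eqn:E2; [|discriminate].
    rewrite (IH _ _ _ E1), (IH _ _ _ E2). exact E.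
  - rewrite pe_rec in E |- *. destruct (nunpair x) as [y n].
    destruct n as [|n].
    + apply IH; exact E.
    + destruct (peval k (PRec c1 c2) (npair y n)) as [r|] eqn:E1; [|discriminate].
      rewrite (IH _ _ _ E1). apply IH; exact E.
  - rewrite peval_mu in E |- *. apply muloop_mono with (ev1 := fun i => peval k c (npair x i)).
    + intros i w Ew. apply IH. exact Ew.
    + exact E.
Qed.

Lemma peval_mono k k' c x v : k <= k' -> peval k c x = Some v -> peval k' c x = Some v.
Proof. induction 1; auto. intros; apply peval_S; auto. Qed.

End A2.
Import A2.

Module A3.
Import ListNotations.
Local Open Scope nat_scope.

Inductive pexp : Type :=
| EZ | ES (a : pexp) | EV (i : nat) | EP (a b : pexp) | EFst (a : pexp) | ESnd (a : pexp)
| ECall (g : nat -> nat) (a : pexp) | ELet (a b : pexp) | ERec (n b s : pexp).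

Definition snds (i r : nat) : nat := Nat.iter i un2 r.

Fixpoint eval (r : nat) (e : pexp) : nat :=
  match e with
  | EZ => 0
  | ES a => S (eval r a)
  | EV i => un1 (snds i r)
  | EP a b => npair (eval r a) (eval r b)
  | EFst a => un1 (eval r a)
  | ESnd a => un2 (eval r a)
  | ECall g a => g (eval r a)
  | ELet a b => eval (npair (eval r a) r) b
  | ERec n b s =>
      let fix it (m : nat) : nat :=
        match m with O => eval r b | S m' => eval (npair (it m') (npair m' r)) s end
      in it (eval r n)
  end.

Fixpoint iterR (f0 : nat) (st : nat -> nat -> nat) (m : nat) : nat :=
  match m with O => f0 | S m' => st m' (iterR f0 st m') end.

Lemma eval_rec r n b s : eval r (ERec n b s) =
  iterR (eval r b) (fun m x => eval (npair x (npair m r)) s) (eval r n).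
Proof.
  simpl. generalize (eval r n). induction n0; simpl; congruence.
Qed.

Fixpoint oracles_ok (e : pexp) : Prop :=
  match e with
  | EZ | EV _ => True
  | ES a | EFst a | ESnd a => oracles_ok a
  | EP a b | ELet a b => oracles_ok a /\ oracles_ok b
  | ECall g a => recursive g /\ oracles_ok a
  | ERec n b s => oracles_ok n /\ oracles_ok b /\ oracles_ok s
  end.

Definition computes (c : prcode) (f : nat -> nat) := forall x, exists k, peval k c x = Some (f x).

Lemma computes_comp c d f g : computes c f -> computes d g -> computes (PComp c d) (fun x => f (g x)).
Proof.
  intros Hc Hd x. destruct (Hd x) as [k1 EFst]. destruct (Hc (g x)) as [k2 ESnd].
  exists (S (k1 + k2)). rewrite pe_comp.
  rewrite (peval_mono k1 (k1 + k2) _ _ _ ltac:(lia) EFst). apply (peval_mono k2); [lia|exact ESnd].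
Qed.

Lemma computes_pair c d f g : computes c f -> computes d g -> computes (PPair c d) (fun x => npair (f x) (g x)).
Proof.
  intros Hc Hd x. destruct (Hc x) as [k1 EFst]. destruct (Hd x) as [k2 ESnd].
  exists (S (k1 + k2)). rewrite pe_pair.
  rewrite (peval_mono k1 (k1 + k2) _ _ _ ltac:(lia) EFst), (peval_mono k2 (k1 + k2) _ _ _ ltac:(lia) ESnd). reflexivity.
Qed.

Lemma computes_id : computes PId (fun x => x).
Proof. intros x; exists 1; reflexivity. Qed.
Lemma computes_fst : computes PFst un1.
Proof. intros x; exists 1; reflexivity. Qed.
Lemma computes_snd : computes PSnd un2.
Proof. intros x; exists 1; reflexivity. Qed.
Lemma computes_zero : computes PZero (fun _ => 0).
Proof. intros x; exists 1; reflexivity. Qed.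
Lemma computes_succ : computes PSucc S.
Proof. intros x; exists 1; reflexivity. Qed.

Lemma computes_ext c f g : computes c f -> (forall x, f x = g x) -> computes c g.
Proof. intros H E x. destruct (H x) as [k Hk]. exists k. rewrite <- E. exact Hk. Qed.

Lemma computes_rec c d f g :
  computes c f -> computes d g ->
  computes (PRec c d) (fun x => iterR (f (un1 x)) (fun m r => g (npair (un1 x) (npair m r))) (un2 x)).
Proof.
  intros Hc Hd x. rewrite <- (pair_unpair x). rewrite un1_pair, un2_pair.
  generalize (un1 x) (un2 x). intros y n. induction n as [|n IH].
  - destruct (Hc y) as [k E]. exists (S k). rewrite pe_rec, unpair_pair. exact E.
  - destruct IH as [k1 EFst]. simpl.
    destruct (Hd (npair y (npair n (iterR (f y) (fun m r => g (npair y (npair m r))) n)))) as [k2 ESnd].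
    exists (S (k1 + k2)). rewrite pe_rec, unpair_pair.
    rewrite (peval_mono k1 (k1 + k2) _ _ _ ltac:(lia) EFst). apply (peval_mono k2); [lia|exact ESnd].
Qed.

Fixpoint sndcode (i : nat) : prcode := match i with O => PId | S i' => PComp PSnd (sndcode i') end.
Lemma computes_snds i : computes (sndcode i) (snds i).
Proof.
  induction i as [|i IH]; simpl.
  - apply computes_id.
  - apply (computes_comp _ _ _ _ computes_snd IH).
Qed.

Theorem compile e : oracles_ok e -> exists c, computes c (fun r => eval r e).
Proof.
  induction e; simpl; intros Ho.
  - exists PZero. apply computes_zero.
  - destruct (IHe Ho) as [c Hc]. exists (PComp PSucc c). apply (computes_comp _ _ _ _ computes_succ Hc).
  - exists (PComp PFst (sndcode i)). apply (computes_comp _ _ _ _ computes_fst (computes_snds i)).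
  - destruct Ho as [H1 H2]. destruct (IHe1 H1) as [c1 C1]. destruct (IHe2 H2) as [c2 C2].
    exists (PPair c1 c2). apply (computes_pair _ _ _ _ C1 C2).
  - destruct (IHe Ho) as [c Hc]. exists (PComp PFst c). apply (computes_comp _ _ _ _ computes_fst Hc).
  - destruct (IHe Ho) as [c Hc]. exists (PComp PSnd c). apply (computes_comp _ _ _ _ computes_snd Hc).
  - destruct Ho as [[cg Hg] H2]. destruct (IHe H2) as [c Hc].
    exists (PComp cg c). apply (computes_comp _ _ _ _ Hg Hc).
  - destruct Ho as [H1 H2]. destruct (IHe1 H1) as [c1 C1]. destruct (IHe2 H2) as [c2 C2].
    exists (PComp c2 (PPair c1 PId)).
    apply (computes_comp _ _ _ _ C2 (computes_pair _ _ _ _ C1 computes_id)).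
  - destruct Ho as [H1 [H2 H3]]. destruct (IHe1 H1) as [cn Cn]. destruct (IHe2 H2) as [cb Cb].
    destruct (IHe3 H3) as [cs Cs].
    set (G := PComp cs (PPair (PComp PSnd PSnd) (PPair (PComp PFst PSnd) PFst))).
    assert (CG : computes G (fun x => eval (npair (un2 (un2 x)) (npair (un1 (un2 x)) (un1 x))) e3)).
    { apply (computes_comp _ _ _ _ Cs).
      apply computes_pair. apply (computes_comp _ _ _ _ computes_snd computes_snd).
      apply computes_pair. apply (computes_comp _ _ _ _ computes_fst computes_snd).
      apply computes_fst. }
    exists (PComp (PRec cb G) (PPair PId cn)).
    eapply computes_ext.
    + apply (computes_comp _ _ _ _ (computes_rec _ _ _ _ Cb CG) (computes_pair _ _ _ _ computes_id Cn)).
    + intros x. cbv beta. rewrite !un1_pair, !un2_pair.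
      generalize (eval x e1). induction n as [|n IH]; simpl; [reflexivity|].
      rewrite !un1_pair, !un2_pair, IH, !un1_pair. reflexivity.
Qed.

Corollary compile_rec e : oracles_ok e -> recursive (fun x => eval (npair x 0) e).
Proof.
  intros H. destruct (compile e H) as [c Hc].
  exists (PComp c (PPair PId PZero)).
  apply (computes_comp _ _ _ _ Hc (computes_pair _ _ _ _ computes_id computes_zero)).
Qed.

End A3.
Import A3.

Module A4.
Import ListNotations.
Local Open Scope nat_scope.

Fixpoint ins (c v r : nat) : nat :=
  match c with O => npair v r | S c' => npair (un1 r) (ins c' v (un2 r)) end.

Fixpoint sh (c : nat) (e : pexp) : pexp :=
  match e with
  | EZ => EZ
  | ES a => ES (sh c a)
  | EV i => EV (if i <? c then i else S i)
  | EP a b => EP (sh c a) (sh c b)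
  | EFst a => EFst (sh c a)
  | ESnd a => ESnd (sh c a)
  | ECall g a => ECall g (sh c a)
  | ELet a b => ELet (sh c a) (sh (S c) b)
  | ERec n b s => ERec (sh c n) (sh c b) (sh (S (S c)) s)
  end.

Lemma snds_S i r : snds (S i) r = un2 (snds i r).
Proof. reflexivity. Qed.

Lemma snds_ins_le i : forall c v r, i <= c -> snds i (ins c v r) = ins (c - i) v (snds i r).
Proof.
  induction i as [|i IH]; intros c v r H.
  - simpl. rewrite Nat.sub_0_r. reflexivity.
  - rewrite !snds_S, IH by lia. destruct (c - i) as [|c'] eqn:Ec; [lia|].
    simpl. rewrite un2_pair. f_equal. lia.
Qed.

Lemma snds_add a b r : snds (a + b) r = snds a (snds b r).
Proof. induction a; [reflexivity|]. rewrite Nat.add_succ_l, !snds_S. congruence. Qed.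

Lemma iterR_ext f0 st1 st2 m : (forall k x, st1 k x = st2 k x) -> iterR f0 st1 m = iterR f0 st2 m.
Proof. intros H; induction m; simpl; congruence. Qed.

Lemma eval_sh e : forall c v r, eval (ins c v r) (sh c e) = eval r e.
Proof.
  induction e; intros c v r; cbn [sh].
  9: { rewrite !eval_rec, IHe1, IHe2. apply iterR_ext. intros k x.
    specialize (IHe3 (S (S c)) v (npair x (npair k r))). simpl in IHe3.
    rewrite !un1_pair, !un2_pair, !un1_pair in IHe3. exact IHe3. }
  all: simpl; try congruence.
  - destruct (Nat.ltb_spec i c).
    + rewrite snds_ins_le by lia. destruct (c - i) as [|c'] eqn:Ec; [lia|]. simpl.
      apply un1_pair.
    + replace (S i) with ((i - c) + S c) by lia. rewrite snds_add.
      rewrite snds_S, snds_ins_le by lia. rewrite Nat.sub_diag. simpl. rewrite un2_pair.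
      rewrite <- snds_add. f_equal. f_equal. lia.
  - rewrite IHe1. specialize (IHe2 (S c) v (npair (eval r e1) r)). simpl in IHe2.
    rewrite un1_pair, un2_pair in IHe2. exact IHe2.
Qed.

Lemma eval_sh0 e v r : eval (npair v r) (sh 0 e) = eval r e.
Proof. apply (eval_sh e 0 v r). Qed.

Lemma oracles_sh e c : oracles_ok e -> oracles_ok (sh c e).
Proof. revert c; induction e; simpl; intros c H; intuition. Qed.

Lemma snds_0 r : snds 0 r = r.
Proof. reflexivity. Qed.

Lemma eval_EZ r : eval r EZ = 0. Proof. reflexivity. Qed.
Lemma eval_ES r a : eval r (ES a) = S (eval r a). Proof. reflexivity. Qed.
Lemma eval_EV r i : eval r (EV i) = un1 (snds i r). Proof. reflexivity. Qed.
Lemma eval_EP r a b : eval r (EP a b) = npair (eval r a) (eval r b). Proof. reflexivity. Qed.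
Lemma eval_EFst r a : eval r (EFst a) = un1 (eval r a). Proof. reflexivity. Qed.
Lemma eval_ESnd r a : eval r (ESnd a) = un2 (eval r a). Proof. reflexivity. Qed.
Lemma eval_ECall r g a : eval r (ECall g a) = g (eval r a). Proof. reflexivity. Qed.
Lemma eval_ELet r a b : eval r (ELet a b) = eval (npair (eval r a) r) b. Proof. reflexivity. Qed.

Ltac ev_simp := repeat progress (rewrite ?eval_EZ, ?eval_ES, ?eval_EV, ?eval_EP, ?eval_EFst, ?eval_ESnd,
  ?eval_ECall, ?eval_ELet, ?snds_S, ?snds_0, ?un1_pair, ?un2_pair, ?eval_sh0).
Tactic Notation "iter_step" uconstr(F) :=
  rewrite (iterR_ext _ _ F) by (intros; ev_simp; reflexivity).

Definition econst (n : nat) : pexp := Nat.iter n ES EZ.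
Lemma eval_const r n : eval r (econst n) = n.
Proof. induction n; simpl; congruence. Qed.

Definition eadd a b := ERec b a (ES (EV 0)).
Lemma eval_add r a b : eval r (eadd a b) = eval r a + eval r b.
Proof.
  unfold eadd. rewrite eval_rec. iter_step (fun _ x => S x). generalize (eval r b). induction n; simpl; lia.
Qed.

Definition epred a := EFst (ERec a (EP EZ EZ) (EP (ESnd (EV 0)) (ES (ESnd (EV 0))))).
Lemma eval_pred r a : eval r (epred a) = pred (eval r a).
Proof.
  unfold epred. rewrite eval_EFst.
  rewrite eval_rec. iter_step (fun _ x => npair (un2 x) (S (un2 x))). ev_simp.
  assert (H : forall n, iterR (npair 0 0) (fun _ x => npair (un2 x) (S (un2 x))) n = npair (pred n) n).
  { induction n; simpl; [reflexivity|]. rewrite IHn, un2_pair. reflexivity. }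
  rewrite H, un1_pair. reflexivity.
Qed.

Definition esub a b := ERec b a (epred (EV 0)).
Lemma eval_sub r a b : eval r (esub a b) = eval r a - eval r b.
Proof.
  unfold esub. rewrite eval_rec.
  rewrite (iterR_ext _ _ (fun _ x => pred x)) by (intros; rewrite eval_pred; ev_simp; reflexivity).
  generalize (eval r b). induction n; simpl; lia.
Qed.

Definition emul a b := ELet a (ERec (sh 0 b) EZ (eadd (EV 0) (EV 2))).
Lemma eval_mul r a b : eval r (emul a b) = eval r a * eval r b.
Proof.
  unfold emul. rewrite eval_ELet.
  rewrite eval_rec, eval_sh0.
  rewrite (iterR_ext _ _ (fun _ x => x + eval r a)) by (intros; rewrite eval_add; ev_simp; reflexivity).
  ev_simp. generalize (eval r b). induction n; simpl; lia.
Qed.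

Definition eifz c t f := ERec c t (sh 0 (sh 0 f)).
Lemma eval_ifz r c t f : eval r (eifz c t f) = match eval r c with O => eval r t | S _ => eval r f end.
Proof.
  unfold eifz. rewrite eval_rec. destruct (eval r c); simpl; [reflexivity|].
  rewrite eval_sh0, eval_sh0. reflexivity.
Qed.

Definition b2n (b : bool) : nat := if b then 1 else 0.

Definition eleb a b := eifz (esub a b) (econst 1) EZ.
Lemma eval_leb r a b : eval r (eleb a b) = b2n (eval r a <=? eval r b).
Proof.
  unfold eleb. rewrite eval_ifz, eval_sub, eval_const. simpl.
  destruct (Nat.leb_spec (eval r a) (eval r b)); destruct (eval r a - eval r b) eqn:E; simpl; lia.
Qed.

Definition eeqb a b := eifz (eadd (esub a b) (esub b a)) (econst 1) EZ.
Lemma eval_eqb r a b : eval r (eeqb a b) = b2n (eval r a =? eval r b).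
Proof.
  unfold eeqb. rewrite eval_ifz, eval_add, !eval_sub, eval_const. simpl.
  destruct (Nat.eqb_spec (eval r a) (eval r b));
    destruct (eval r a - eval r b + (eval r b - eval r a)) eqn:E; simpl; lia.
Qed.

Definition eand a b := eifz a EZ (eifz b EZ (econst 1)).
Lemma eval_and r a b : eval r (eand a b) = b2n (negb (eval r a =? 0) && negb (eval r b =? 0)).
Proof.
  unfold eand. rewrite !eval_ifz, eval_const. simpl.
  destruct (eval r a); destruct (eval r b); reflexivity.
Qed.

Definition epow a b := ELet a (ERec (sh 0 b) (econst 1) (emul (EV 0) (EV 2))).
Lemma eval_pow r a b : eval r (epow a b) = eval r a ^ eval r b.
Proof.
  unfold epow. rewrite eval_ELet.
  rewrite eval_rec, eval_sh0, eval_const.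
  rewrite (iterR_ext _ _ (fun _ x => x * eval r a)) by (intros; rewrite eval_mul; ev_simp; reflexivity).
  generalize (eval r b). induction n; simpl; [reflexivity|]. rewrite IHn. lia.
Qed.

Definition edivmod a m :=
  ELet m (ERec (sh 0 a) (EP EZ EZ)
     (eifz (eeqb (ES (ESnd (EV 0))) (EV 2)) (EP (EFst (EV 0)) (ES (ESnd (EV 0)))) (EP (ES (EFst (EV 0))) EZ))).
Lemma eval_divmod r a m : 0 < eval r m ->
  eval r (edivmod a m) = npair (eval r a / eval r m) (eval r a mod eval r m).
Proof.
  intros Hm. unfold edivmod. rewrite eval_ELet.
  rewrite eval_rec, eval_sh0.
  set (M := eval r m) in *.
  rewrite (iterR_ext _ _ (fun _ x => if S (un2 x) =? M then npair (S (un1 x)) 0 else npair (un1 x) (S (un2 x))))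
    by (intros; rewrite eval_ifz, eval_eqb; ev_simp; destruct (_ =? _); reflexivity).
  ev_simp. generalize (eval r a). intros n.
  induction n as [|n IH].
  - simpl. rewrite Nat.Div0.div_0_l, Nat.Div0.mod_0_l by lia. reflexivity.
  - cbn [iterR]. rewrite IH, un1_pair, un2_pair.
    assert (Hd := Nat.div_mod n M ltac:(lia)). assert (Hr := Nat.mod_upper_bound n M ltac:(lia)).
    destruct (Nat.eqb_spec (S (n mod M)) M) as [E|E]; simpl.
    + f_equal.
      * apply (Nat.div_unique _ _ _ 0); lia.
      * apply (Nat.mod_unique _ _ (S (n / M))); lia.
    + f_equal.
      * apply (Nat.div_unique _ _ _ (S (n mod M))); lia.
      * apply (Nat.mod_unique _ _ (n / M)); lia.
Qed.

Definition ediv a m := EFst (edivmod a m).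
Definition emod a m := ESnd (edivmod a m).
Lemma eval_div r a m : 0 < eval r m -> eval r (ediv a m) = eval r a / eval r m.
Proof. intros H. unfold ediv. rewrite eval_EFst. rewrite eval_divmod by exact H. apply un1_pair. Qed.
Lemma eval_mod r a m : 0 < eval r m -> eval r (emod a m) = eval r a mod eval r m.
Proof. intros H. unfold emod. rewrite eval_ESnd. rewrite eval_divmod by exact H. apply un2_pair. Qed.

Definition enth k l := EFst (ERec k l (ESnd (EV 0))).
Lemma eval_nth r k l : eval r (enth k l) = un1 (snds (eval r k) (eval r l)).
Proof.
  unfold enth. rewrite eval_EFst. rewrite eval_rec. f_equal.
  iter_step (fun _ x => un2 x).
  generalize (eval r k). induction n; simpl; [reflexivity|]. rewrite IHn. reflexivity.
Qed.

End A4.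
Import A4.

Module B1.
Import ListNotations.
Local Open Scope R_scope.

Lemma prefix_length w n : length (prefix w n) = n.
Proof. induction n; simpl; [reflexivity|]. rewrite length_app, IHn. simpl. lia. Qed.

Lemma upper_exp_le lo hi f v :
  Rbar_le (upper_exp lo hi f) (Finite v) <->
  (forall p, lo <= p <= hi -> p * f true + (1 - p) * f false <= v).
Proof.
  unfold upper_exp. destruct (Lub_Rbar_correct
    (fun v => exists p, lo <= p <= hi /\ v = p * f true + (1 - p) * f false)) as [Hub Hl].
  split.
  - intros H p Hp. assert (Hx := Hub (p * f true + (1 - p) * f false) (ex_intro _ p (conj Hp eq_refl))).
    exact (Rbar_le_trans _ _ _ Hx H).
  - intros H. apply Hl. intros x [p [Hp ->]]. simpl. apply H; exact Hp.
Qed.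

Lemma lin_endpoints lo hi a b v : lo <= hi ->
  lo * a + (1 - lo) * b <= v -> hi * a + (1 - hi) * b <= v ->
  forall p, lo <= p <= hi -> p * a + (1 - p) * b <= v.
Proof.
  intros Hlh H1 H2 p Hp. destruct (Rle_dec b a).
  - apply Rle_trans with (hi * a + (1 - hi) * b); [nra|exact H2].
  - apply Rle_trans with (lo * a + (1 - lo) * b); [nra|exact H1].
Qed.

Definition lo_ (phi : forecasting_system) := fs_lo phi.
Definition hi_ (phi : forecasting_system) := fs_hi phi.

Lemma sm_iff phi M : supermartingale phi M <->
  forall s, fs_lo phi s * M (s ++ [true]) + (1 - fs_lo phi s) * M (s ++ [false]) <= M s /\
            fs_hi phi s * M (s ++ [true]) + (1 - fs_hi phi s) * M (s ++ [false]) <= M s.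
Proof.
  unfold supermartingale. split.
  - intros H s. specialize (H s). rewrite upper_exp_le in H.
    split; apply H; pose proof (fs_lo_le_hi phi s); lra.
  - intros H s. rewrite upper_exp_le. destruct (H s) as [H1 H2].
    apply lin_endpoints; auto. apply fs_lo_le_hi.
Qed.

Lemma sm_min phi M s : supermartingale phi M ->
  M (s ++ [true]) <= M s \/ M (s ++ [false]) <= M s.
Proof.
  intros H. destruct (proj1 (sm_iff phi M) H s) as [H1 _].
  pose proof (fs_lo_ge0 phi s). pose proof (fs_lo_le_hi phi s). pose proof (fs_hi_le1 phi s).
  destruct (Rle_dec (M (s ++ [true])) (M s)); [left; auto|right].
  destruct (Rle_dec (M (s ++ [false])) (M s)); [auto|].
  exfalso. apply Rnot_le_lt in n. apply Rnot_le_lt in n0.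
  assert (0 <= fs_lo phi s * (M (s ++ [true]) - M s)) by (apply Rmult_le_pos; lra).
  assert (0 <= (1 - fs_lo phi s) * (M (s ++ [false]) - M s)) by (apply Rmult_le_pos; lra).
  destruct (Req_dec (fs_lo phi s) 0) as [E|E].
  - rewrite E in H1. lra.
  - assert (0 < fs_lo phi s * (M (s ++ [true]) - M s)) by (apply Rmult_lt_0_compat; lra). nra.
Qed.

Lemma firstn_snoc (u : list bool) k : (k < length u)%nat ->
  firstn (S k) u = firstn k u ++ [nth k u false].
Proof.
  revert k; induction u as [|a u IH]; intros k Hk; simpl in Hk; [lia|].
  destruct k as [|k]; [reflexivity|]. change (a :: firstn (S k) u = (a :: firstn k u) ++ [nth k u false]). rewrite IH by lia. reflexivity.
Qed.

Lemma sm_path phi M u : supermartingale phi M ->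
  exists w', prefix w' (length u) = u /\
    forall m, (length u <= m)%nat -> M (prefix w' m) <= M u.
Proof.
  intros HM.
  set (step := fun v => if Rle_dec (M (v ++ [true])) (M v) then true else false).
  set (Q := fix Q (m : nat) : situation := match m with O => u | S m' => Q m' ++ [step (Q m')] end).
  set (w' := fun k => if Nat.ltb k (length u) then nth k u false else step (Q (k - length u)%nat)).
  assert (P1 : forall k, (k <= length u)%nat -> prefix w' k = firstn k u).
  { induction k; intros Hk; cbn [prefix]; [reflexivity|].
    rewrite IHk by lia. rewrite firstn_snoc by lia. f_equal. unfold w'.
    destruct (Nat.ltb_spec k (length u)); [reflexivity|lia]. }
  assert (P2 : forall m, prefix w' (length u + m) = Q m).
  { induction m.
    - rewrite Nat.add_0_r, P1 by lia. apply firstn_all.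
    - rewrite Nat.add_succ_r. simpl. rewrite IHm. f_equal. f_equal. unfold w'.
      destruct (Nat.ltb_spec (length u + m) (length u)); [lia|]. f_equal. f_equal. lia. }
  assert (P3 : forall m, M (Q m) <= M u).
  { induction m; simpl; [lra|].
    unfold step. destruct (Rle_dec (M (Q m ++ [true])) (M (Q m))).
    - lra.
    - destruct (sm_min phi M (Q m) HM); lra. }
  exists w'. split.
  - rewrite P1 by lia. apply firstn_all.
  - intros m Hm. replace m with (length u + (m - length u))%nat by lia. rewrite P2. apply P3.
Qed.

Lemma indicator_1 (G : path -> Prop) w : G w -> indicator G w = 1.
Proof. intros H. unfold indicator. destruct (excluded_middle_informative (G w)); tauto. Qed.
Lemma indicator_ge0 (G : path -> Prop) w : 0 <= indicator G w.
Proof. unfold indicator. destruct (excluded_middle_informative (G w)); lra. Qed.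

Lemma liminf_le_const (u : nat -> R) c N : (forall n, (N <= n)%nat -> u n <= c) -> Rbar_le (LimInf_seq u) c.
Proof.
  intros H. rewrite <- (LimInf_seq_const c). apply LimInf_le. exists N. exact H.
Qed.
Lemma liminf_ge_const (u : nat -> R) c N : (forall n, (N <= n)%nat -> c <= u n) -> Rbar_le c (LimInf_seq u).
Proof.
  intros H. rewrite <- (LimInf_seq_const c) at 1. apply LimInf_le. exists N. exact H.
Qed.

Lemma sm_dom_bound phi M (G : path -> Prop) u : supermartingale phi M ->
  (forall w, Rbar_le (Finite (indicator G w)) (LimInf_seq (fun n => M (prefix w n)))) ->
  (0 <= M u) /\ ((forall w', prefix w' (length u) = u -> G w') -> 1 <= M u).
Proof.
  intros HM HG. destruct (sm_path phi M u HM) as [w' [Hp Hle]].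
  assert (Hli := liminf_le_const (fun n => M (prefix w' n)) (M u) (length u) Hle).
  specialize (HG w'). assert (Hc := Rbar_le_trans _ _ _ HG Hli). simpl in Hc.
  split.
  - pose proof (indicator_ge0 G w'); lra.
  - intros HGu. rewrite indicator_1 in Hc by (apply HGu; exact Hp). exact Hc.
Qed.

End B1.
Import B1.

Module C1.
Import ListNotations.
Local Open Scope R_scope.

Lemma INR_2pow n : INR (2 ^ n) = 2 ^ n.
Proof. rewrite pow_INR. simpl. replace (1 + 1) with 2 by lra. reflexivity. Qed.

Lemma even_mod2 a : Nat.even a = (a mod 2 =? 0)%nat.
Proof.
  destruct (Nat.even a) eqn:E; symmetry.
  - apply Nat.eqb_eq. apply Nat.even_spec in E. destruct E as [m ->].
    rewrite Nat.mul_comm. apply Nat.Div0.mod_mul.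
  - apply Nat.eqb_neq. intros H. assert (Nat.even a = true); [|congruence].
    apply Nat.even_spec. exists (a / 2)%nat. pose proof (Nat.div_mod a 2). lia.
Qed.

Lemma decQ_gt_pow v n : decQ v > 2 ^ n <->
  andb (Nat.eqb (un1 v mod 2)%nat 0) (negb (Nat.leb (un1 v / 2)%nat (2 ^ n * S (un2 v))%nat)) = true.
Proof.
  unfold decQ, decZ. fold (un1 v). fold (un2 v). rewrite even_mod2.
  pose proof (pos_INR (S (un2 v))) as HS. assert (HS' : 0 < INR (S (un2 v))) by (apply lt_0_INR; lia).
  pose proof (pow_lt 2 n ltac:(lra)) as Hp2.
  destruct (un1 v mod 2 =? 0)%nat; cbn [andb negb].
  - rewrite Bool.negb_true_iff, Nat.leb_gt. split; intros H.
    + apply INR_lt. rewrite mult_INR, INR_2pow.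
      assert (E : INR (un1 v / 2)%nat = INR (un1 v / 2)%nat / INR (S (un2 v)) * INR (S (un2 v))) by (field; lra).
      rewrite E. apply Rmult_lt_compat_r; lra.
    + apply lt_INR in H. rewrite mult_INR, INR_2pow in H.
      assert (E : 2 ^ n = 2 ^ n * INR (S (un2 v)) / INR (S (un2 v))) by (field; lra).
      rewrite E. apply Rmult_lt_compat_r; [apply Rinv_0_lt_compat; lra|lra].
  - split; intros H; [|discriminate].
    exfalso. pose proof (pos_INR ((un1 v + 1) / 2)).
    assert (0 <= INR ((un1 v + 1) / 2) / INR (S (un2 v))) by (apply Rdiv_le_0_compat; lra).
    unfold Rdiv in *. rewrite Ropp_mult_distr_l_reverse in H. lra.
Qed.

Lemma lim_gt_witness (u : nat -> R) l c : is_lim_seq u (Finite l) -> c < l -> exists n, c < u n.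
Proof.
  intros H Hc. apply NNPP. intros Hn.
  assert (Hle : forall n, u n <= c) by (intros n; apply Rnot_lt_le; intros Hl; apply Hn; exists n; exact Hl).
  assert (Hr := is_lim_seq_le u (fun _ => c) l c Hle H (is_lim_seq_const c)). simpl in Hr. lra.
Qed.

Definition eneg a := eifz a (econst 1) EZ.

Definition hexp (g : nat -> nat) : pexp :=
  ELet (ECall g (EP (ESnd (EFst (EV 0))) (ESnd (EV 0))))
    (eifz (eand (eeqb (emod (EFst (EV 0)) (econst 2)) EZ)
                (eneg (eleb (ediv (EFst (EV 0)) (econst 2))
                            (emul (epow (econst 2) (EFst (EFst (EV 1)))) (ES (ESnd (EV 0)))))))
          (econst 1) EZ).

Lemma eval_hexp g n e k :
  eval (npair (npair (npair n e) k) 0) (hexp g) =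
  if andb (Nat.eqb (un1 (g (npair e k)) mod 2)%nat 0) (negb (Nat.leb (un1 (g (npair e k)) / 2)%nat (2 ^ n * S (un2 (g (npair e k))))%nat))
  then 0%nat else 1%nat.
Proof.
  unfold hexp, eneg. rewrite eval_ELet. ev_simp.
  rewrite eval_ifz, eval_and, eval_eqb, eval_mod, eval_ifz, eval_leb, eval_div, eval_mul, eval_pow;
    ev_simp; rewrite ?eval_const; try lia.
  set (a := un1 (g (npair e k))). set (b := un2 (g (npair e k))).
  destruct (a mod 2 =? 0)%nat; simpl; [|reflexivity].
  destruct (Nat.leb _ _); reflexivity.
Qed.

Lemma hexp_ok g : recursive g -> oracles_ok (hexp g).
Proof. intros H. simpl. tauto. Qed.

Lemma firstn_prefix w k m : (k <= m)%nat -> firstn k (prefix w m) = prefix w k.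
Proof.
  induction m; intros H.
  - assert (k = 0%nat) by lia. subst. reflexivity.
  - destruct (Nat.eq_dec k (S m)) as [->|Hne].
    + rewrite <- (prefix_length w (S m)) at 1. apply firstn_all.
    + simpl. rewrite firstn_app, prefix_length.
      replace (k - m)%nat with 0%nat by lia. simpl. rewrite app_nil_r. apply IHm. lia.
Qed.

Lemma firstn_snoc2 (s : list bool) x k : (k <= length s)%nat -> firstn k (s ++ [x]) = firstn k s.
Proof. intros H. rewrite firstn_app. replace (k - length s)%nat with 0%nat by lia. simpl. apply app_nil_r. Qed.

Section Dir2.
Variable phi : forecasting_system.
Variable T : situation -> R.
Variable g : nat -> nat.
Hypothesis Hg : recursive g.
Hypothesis Hmono : forall s n, decQ (g (npair (encS s) n)) <= decQ (g (npair (encS s) (S n))).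
Hypothesis Hlim : forall s, is_lim_seq (fun n => decQ (g (npair (encS s) n))) (Finite (T s)).
Hypothesis HT : test_supermartingale phi T.

Definition Aset (n : nat) (s : situation) : Prop := exists m, decQ (g (npair (encS s) m)) > 2 ^ n.

Lemma approx_le_T s m : decQ (g (npair (encS s) m)) <= T s.
Proof. apply (is_lim_seq_incr_compare _ _ (Hlim s)). intros k; apply Hmono. Qed.

Lemma Aset_T n s : Aset n s -> T s > 2 ^ n.
Proof. intros [m Hm]. pose proof (approx_le_T s m). lra. Qed.

Lemma Aset_re : rec_enumerable Aset.
Proof.
  exists (fun x => eval (npair x 0) (hexp g)). split.
  - apply compile_rec, hexp_ok, Hg.
  - intros n s. unfold Aset. split; intros [m Hm]; exists m.
    + rewrite eval_hexp. apply decQ_gt_pow in Hm. rewrite Hm. reflexivity.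
    + rewrite eval_hexp in Hm. apply decQ_gt_pow.
      destruct (andb _ _); [reflexivity|discriminate].
Qed.

Definition stopped n (u : situation) : Prop := exists k, (k <= length u)%nat /\ Aset n (firstn k u).

Definition Mst n (u : situation) : R :=
  if excluded_middle_informative (stopped n u) then 1 else T u / 2 ^ n.

Lemma Mst_le n u : ~ stopped n u -> Mst n u = T u / 2 ^ n.
Proof. intros H. unfold Mst. destruct (excluded_middle_informative _); tauto. Qed.
Lemma Mst_st n u : stopped n u -> Mst n u = 1.
Proof. intros H. unfold Mst. destruct (excluded_middle_informative _); tauto. Qed.

Lemma stopped_ext n s x : stopped n s -> stopped n (s ++ [x]).
Proof.
  intros [k [Hk HA]]. exists k. split; [rewrite length_app; simpl; lia|].
  rewrite firstn_snoc2 by lia. exact HA.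
Qed.

Lemma Mst_child n s x : ~ stopped n s -> Mst n (s ++ [x]) <= T (s ++ [x]) / 2 ^ n.
Proof.
  intros Hs. unfold Mst. destruct (excluded_middle_informative _) as [[k [Hk HA]]|]; [|lra].
  rewrite length_app in Hk. simpl in Hk.
  destruct (Nat.eq_dec k (S (length s))) as [->|Hne].
  - replace (S (length s)) with (length (s ++ [x])) in HA by (rewrite length_app; simpl; lia).
    rewrite firstn_all in HA. apply Aset_T in HA.
    pose proof (pow_lt 2 n ltac:(lra)). apply Rmult_le_reg_r with (2 ^ n); [lra|].
    unfold Rdiv. rewrite Rmult_assoc, Rinv_l by lra. lra.
  - exfalso. apply Hs. exists k. split; [lia|]. rewrite firstn_snoc2 in HA by lia. exact HA.
Qed.

Lemma Mst_nonneg n u : 0 <= Mst n u.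
Proof.
  unfold Mst. destruct (excluded_middle_informative _); [lra|].
  destruct HT as [_ [H0 _]]. pose proof (pow_lt 2 n ltac:(lra)).
  apply Rdiv_le_0_compat; [apply H0|lra].
Qed.

Lemma Mst_sm n : supermartingale phi (Mst n).
Proof.
  apply sm_iff. intros s.
  assert (Gen : forall p, 0 <= p <= 1 ->
     p * T (s ++ [true]) + (1 - p) * T (s ++ [false]) <= T s ->
     p * Mst n (s ++ [true]) + (1 - p) * Mst n (s ++ [false]) <= Mst n s).
  { intros p Hp HTp. destruct (classic (stopped n s)) as [Hs|Hs].
    - rewrite !Mst_st by (auto using stopped_ext). lra.
    - rewrite (Mst_le n s Hs).
      pose proof (Mst_child n s true Hs). pose proof (Mst_child n s false Hs).
      pose proof (pow_lt 2 n ltac:(lra)).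
      apply Rle_trans with (p * (T (s ++ [true]) / 2 ^ n) + (1 - p) * (T (s ++ [false]) / 2 ^ n)).
      + apply Rplus_le_compat; apply Rmult_le_compat_l; lra.
      + unfold Rdiv. apply Rmult_le_reg_r with (2 ^ n); [lra|].
        replace ((p * (T (s ++ [true]) * / 2 ^ n) + (1 - p) * (T (s ++ [false]) * / 2 ^ n)) * 2 ^ n)
          with (p * T (s ++ [true]) + (1 - p) * T (s ++ [false])) by (field; lra).
        replace (T s * / 2 ^ n * 2 ^ n) with (T s) by (field; lra). exact HTp. }
  destruct HT as [HTs _]. destruct (proj1 (sm_iff phi T) HTs s) as [H1 H2].
  pose proof (fs_lo_ge0 phi s). pose proof (fs_lo_le_hi phi s). pose proof (fs_hi_le1 phi s).
  split; apply Gen; auto; lra.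
Qed.

Lemma Mst_dom n w0 : Rbar_le (Finite (indicator (cylinder_set (Aset n)) w0))
                               (LimInf_seq (fun m => Mst n (prefix w0 m))).
Proof.
  destruct (classic (cylinder_set (Aset n) w0)) as [Hc|Hc].
  - rewrite indicator_1 by exact Hc. destruct Hc as [t [HA Hcyl]].
    apply (liminf_ge_const _ 1 (length t)). intros m Hm.
    rewrite Mst_st; [lra|]. exists (length t). rewrite prefix_length. split; [exact Hm|].
    rewrite firstn_prefix by exact Hm. unfold cylinder in Hcyl. rewrite Hcyl. exact HA.
  - unfold indicator. destruct (excluded_middle_informative _); [tauto|].
    apply (liminf_ge_const _ 0 0). intros; apply Mst_nonneg.
Qed.

Lemma Mst_root n : Mst n [] = / 2 ^ n.
Proof.
  destruct HT as [_ [_ H1]].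
  rewrite Mst_le.
  - rewrite H1. unfold Rdiv. lra.
  - intros [k [Hk HA]]. simpl in Hk. assert (k = 0%nat) by lia. subst. simpl in HA.
    apply Aset_T in HA. rewrite H1 in HA. pose proof (pow_le 2 n). 
    assert (1 <= 2 ^ n) by (apply pow_R1_Rle; lra). lra.
Qed.

Lemma Aset_test : ML_test phi Aset.
Proof.
  split; [exact Aset_re|]. intros n. unfold upper_prob.
  destruct (Glb_Rbar_correct (fun v => exists M, supermartingale phi M /\
              (forall w, Rbar_le (Finite (indicator (cylinder_set (Aset n)) w))
                                 (LimInf_seq (fun n => M (prefix w n)))) /\
              v = M [])) as [Hlb _].
  rewrite <- Mst_root. apply Hlb. exists (Mst n). split; [apply Mst_sm|]. split; [|reflexivity].
  apply Mst_dom.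
Qed.


End Dir2.

Theorem dir_test_to_ML phi w : ML_test_random phi w -> ML_random phi w.
Proof.
  intros HR T [g [Hg Hgl]] HT.
  apply NNPP. intros Hnb. apply (HR (Aset g)).
  - apply (Aset_test phi T g Hg (fun s => proj1 (Hgl s)) (fun s => proj2 (Hgl s)) HT).
  - intros n. assert (Hx : exists m, T (prefix w m) > 2 ^ n).
    { apply NNPP. intros Hn. apply Hnb. exists (2 ^ n). intros m. apply Rnot_lt_le. intros Hl.
      apply Hn. exists m. exact Hl. }
    destruct Hx as [m Hm].
    destruct (lim_gt_witness _ _ _ (proj2 (Hgl (prefix w m))) Hm) as [k Hk].
    exists (prefix w m). split.
    + exists k. exact Hk.
    + unfold cylinder. rewrite prefix_length. reflexivity.
Qed.

End C1.
Import C1.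

Module D1.
Import ListNotations.
Local Open Scope nat_scope.

Lemma encS_app t r : encS (t ++ r) = encS t + 2 ^ length t * encS r.
Proof.
  induction t as [|b t IH]; simpl; [lia|]. rewrite IH. destruct b; lia.
Qed.

Lemma encS_bounds t : 2 ^ length t - 1 <= encS t /\ encS t <= 2 ^ S (length t) - 2.
Proof.
  induction t as [|b t IH]; cbn [length encS]; [simpl; lia|]. rewrite !Nat.pow_succ_r' in *. pose proof (Nat.pow_nonzero 2 (length t)). destruct b; lia.
Qed.

Lemma encS_snoc u b : encS (u ++ [b]) = encS u + 2 ^ length u * (1 + b2n b).
Proof. rewrite encS_app. destruct b; simpl; lia. Qed.

Lemma pow_ge_S n : n < 2 ^ n.
Proof. induction n; simpl; lia. Qed.

Lemma encS_ge_len u : length u <= encS u.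
Proof. pose proof (encS_bounds u). pose proof (pow_ge_S (length u)). lia. Qed.

Lemma encS_0 u : encS u = 0 -> u = [].
Proof. destruct u as [|b u]; simpl; [auto|]. destruct b; lia. Qed.

Definition lenstep (st : nat) : nat :=
  if un1 st =? 0 then st else npair ((un1 st - 1) / 2) (S (un2 st)).
Definition lenf (e : nat) : nat := un2 (iterR (npair e 0) (fun _ st => lenstep st) e).

Lemma skipn_S_tl (u : list bool) k : skipn (S k) u = tl (skipn k u).
Proof. revert u; induction k; intros [|b u]; simpl; auto. apply IHk. Qed.

Lemma len_iter u c k : iterR (npair (encS u) c) (fun _ st => lenstep st) k =
  npair (encS (skipn k u)) (c + Nat.min k (length u)).
Proof.
  induction k as [|k IH]; cbn [iterR].
  - simpl. f_equal. lia.
  - rewrite IH. unfold lenstep. rewrite un1_pair, un2_pair.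
    rewrite skipn_S_tl. assert (Hs := length_skipn k u). destruct (skipn k u) as [|b s] eqn:E.
    + simpl in Hs. cbn [tl]. rewrite Nat.eqb_refl. f_equal. lia.
    + simpl in Hs. cbn [tl].
      replace (encS (b :: s) =? 0) with false by (simpl; destruct b; symmetry; apply Nat.eqb_neq; lia).
      f_equal; [|lia]. simpl.
      replace (encS s + (encS s + 0) + 1 + (if b then 1 else 0) - 1) with ((if b then 1 else 0) + encS s * 2) by lia.
      change (((if b then 1 else 0) + encS s * 2) / 2 = encS s). rewrite Nat.div_add by lia. destruct b; reflexivity.
Qed.

Lemma lenf_encS u : lenf (encS u) = length u.
Proof.
  unfold lenf. rewrite len_iter, un2_pair. pose proof (encS_ge_len u). lia.
Qed.

Definition prefc (e m : nat) : nat := (e - (2 ^ m - 1)) mod 2 ^ m + (2 ^ m - 1).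

Lemma prefc_encS u m : m <= length u -> prefc (encS u) m = encS (firstn m u).
Proof.
  intros Hm. rewrite <- (firstn_skipn m u) at 1. rewrite encS_app.
  assert (Hl : length (firstn m u) = m) by (rewrite length_firstn; lia). rewrite Hl.
  pose proof (encS_bounds (firstn m u)) as [B1 B2]. rewrite Hl in B1, B2.
  unfold prefc. simpl in B2.
  set (P := 2 ^ m) in *. set (X := encS (skipn m u)). set (Y := encS (firstn m u)) in *.
  rewrite (Nat.mul_comm P X).
  replace (Y + X * P - (P - 1)) with ((Y - (P - 1)) + X * P) by lia.
  assert (P <> 0) by (apply Nat.pow_nonzero; lia).
  rewrite Nat.Div0.mod_add. rewrite Nat.mod_small by lia. lia.
Qed.

Definition childf (e b : nat) : nat := e + 2 ^ lenf e * (1 + b).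

Lemma childf_encS u b : childf (encS u) (b2n b) = encS (u ++ [b]).
Proof. unfold childf. rewrite lenf_encS, encS_snoc. reflexivity. Qed.

End D1.
Import D1.

Module D2.
Import ListNotations.
Local Open Scope R_scope.

Definition rq (x : nat) : R := INR (un1 x) / INR (S (un2 x)).

Definition qmul (x y : nat) : nat := npair (un1 x * un1 y) (S (un2 x) * S (un2 y) - 1).
Definition qadd (x y : nat) : nat :=
  npair (un1 x * S (un2 y) + un1 y * S (un2 x)) (S (un2 x) * S (un2 y) - 1).
Definition qmax (x y : nat) : nat := if (un1 x * S (un2 y) <=? un1 y * S (un2 x))%nat then y else x.
Definition qpos (v : nat) : nat := npair (if (un1 v mod 2 =? 0)%nat then (un1 v / 2)%nat else 0%nat) (un2 v).
Definition qonep (v : nat) : nat :=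
  npair (if (un1 v mod 2 =? 0)%nat then (S (un2 v) + un1 v / 2)%nat else (S (un2 v) - (un1 v + 1) / 2)%nat) (un2 v).
Definition qout (x : nat) : nat := npair (2 * un1 x) (un2 x).
Definition qone : nat := npair 1 0.

Lemma INR_Sgt0 n : 0 < INR (S n).
Proof. apply lt_0_INR; lia. Qed.

Lemma SS_minus1 a b : (S (S a * S b - 1) = S a * S b)%nat.
Proof. nia. Qed.

Lemma rq_nonneg x : 0 <= rq x.
Proof. unfold rq. apply Rdiv_le_0_compat; [apply pos_INR|apply INR_Sgt0]. Qed.

Lemma rq_mul x y : rq (qmul x y) = rq x * rq y.
Proof.
  unfold rq, qmul. rewrite un1_pair, un2_pair, SS_minus1, !mult_INR.
  pose proof (INR_Sgt0 (un2 x)). pose proof (INR_Sgt0 (un2 y)). field. lra.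
Qed.

Lemma rq_add x y : rq (qadd x y) = rq x + rq y.
Proof.
  unfold rq, qadd. rewrite un1_pair, un2_pair, SS_minus1, plus_INR, !mult_INR.
  pose proof (INR_Sgt0 (un2 x)). pose proof (INR_Sgt0 (un2 y)). field. lra.
Qed.

Lemma rq_le_iff x y : rq x <= rq y <-> (un1 x * S (un2 y) <= un1 y * S (un2 x))%nat.
Proof.
  unfold rq. pose proof (INR_Sgt0 (un2 x)). pose proof (INR_Sgt0 (un2 y)).
  split; intros Hle.
  - apply INR_le. rewrite !mult_INR.
    assert (E1 : INR (un1 x) = INR (un1 x) / INR (S (un2 x)) * INR (S (un2 x))) by (field; lra).
    assert (E2 : INR (un1 y) = INR (un1 y) / INR (S (un2 y)) * INR (S (un2 y))) by (field; lra).
    rewrite E1, E2. set (a := INR (un1 x) / INR (S (un2 x))) in *. set (b := INR (un1 y) / INR (S (un2 y))) in *.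
    assert (0 <= (b - a) * (INR (S (un2 x)) * INR (S (un2 y)))) by (apply Rmult_le_pos; nra). nra.
  - apply le_INR in Hle. rewrite !mult_INR in Hle.
    apply Rmult_le_reg_r with (INR (S (un2 x)) * INR (S (un2 y))); [nra|].
    replace (INR (un1 x) / INR (S (un2 x)) * (INR (S (un2 x)) * INR (S (un2 y)))) with (INR (un1 x) * INR (S (un2 y))) by (field; lra).
    replace (INR (un1 y) / INR (S (un2 y)) * (INR (S (un2 x)) * INR (S (un2 y)))) with (INR (un1 y) * INR (S (un2 x))) by (field; lra).
    exact Hle.
Qed.

Lemma rq_max x y : rq (qmax x y) = Rmax (rq x) (rq y).
Proof.
  unfold qmax. destruct (Nat.leb_spec (un1 x * S (un2 y)) (un1 y * S (un2 x))) as [H|H].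
  - apply rq_le_iff in H. rewrite Rmax_right; lra.
  - assert (H' : (un1 y * S (un2 x) <= un1 x * S (un2 y))%nat) by lia. apply rq_le_iff in H'.
    rewrite Rmax_left; lra.
Qed.

Lemma decQ_qout x : decQ (qout x) = rq x.
Proof.
  unfold decQ, decZ, qout, rq. fold (un1 (npair (2 * un1 x) (un2 x))). fold (un2 (npair (2 * un1 x) (un2 x))).
  rewrite un1_pair, un2_pair.
  replace (Nat.even (2 * un1 x)) with true by (symmetry; apply Nat.even_spec; exists (un1 x); reflexivity).
  replace (2 * un1 x / 2)%nat with (un1 x) by (rewrite Nat.mul_comm, Nat.div_mul; lia). reflexivity.
Qed.

Lemma rq_qone : rq qone = 1.
Proof. unfold rq, qone. rewrite un1_pair, un2_pair. simpl. lra. Qed.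
Lemma rq_zero : rq 0 = 0.
Proof. unfold rq. change (un1 0) with 0%nat. simpl. lra. Qed.

Lemma decQ_split v : decQ v =
  if (un1 v mod 2 =? 0)%nat then INR (un1 v / 2) / INR (S (un2 v))
  else - (INR ((un1 v + 1) / 2) / INR (S (un2 v))).
Proof.
  unfold decQ, decZ. fold (un1 v). fold (un2 v). rewrite even_mod2.
  destruct (un1 v mod 2 =? 0)%nat; [reflexivity|]. unfold Rdiv. ring.
Qed.

Lemma rq_pos v : rq (qpos v) = Rmax (decQ v) 0.
Proof.
  rewrite decQ_split. unfold rq, qpos. rewrite un1_pair, un2_pair. pose proof (INR_Sgt0 (un2 v)).
  destruct (un1 v mod 2 =? 0)%nat.
  - rewrite Rmax_left; [reflexivity|]. apply Rdiv_le_0_compat; [apply pos_INR|lra].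
  - rewrite Rmax_right.
    + simpl. unfold Rdiv. ring.
    + assert (0 <= INR ((un1 v + 1) / 2) / INR (S (un2 v))) by (apply Rdiv_le_0_compat; [apply pos_INR|lra]). lra.
Qed.

Lemma rq_onep v : rq (qonep v) = Rmax (1 + decQ v) 0.
Proof.
  rewrite decQ_split. unfold rq, qonep. rewrite un1_pair, un2_pair. pose proof (INR_Sgt0 (un2 v)).
  destruct (un1 v mod 2 =? 0)%nat.
  - rewrite Rmax_left.
    + rewrite plus_INR. field. lra.
    + assert (0 <= INR (un1 v / 2) / INR (S (un2 v))) by (apply Rdiv_le_0_compat; [apply pos_INR|lra]). lra.
  - destruct (Nat.le_gt_cases ((un1 v + 1) / 2) (S (un2 v))) as [Hl|Hl].
    + rewrite minus_INR by exact Hl. rewrite Rmax_left.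
      * field. lra.
      * apply le_INR in Hl.
        assert (INR ((un1 v + 1) / 2) / INR (S (un2 v)) <= 1).
        { apply Rmult_le_reg_r with (INR (S (un2 v))); [lra|]. unfold Rdiv.
          rewrite Rmult_assoc, Rinv_l by lra. lra. }
        lra.
    + replace (S (un2 v) - (un1 v + 1) / 2)%nat with 0%nat by lia. rewrite Rmax_right.
      * simpl. unfold Rdiv. ring.
      * apply lt_INR in Hl.
        assert (1 < INR ((un1 v + 1) / 2) / INR (S (un2 v))).
        { apply Rmult_lt_reg_r with (INR (S (un2 v))); [lra|]. unfold Rdiv.
          rewrite Rmult_assoc, Rinv_l by lra. lra. }
        lra.
Qed.

Definition eqmul a b := ELet a (ELet (sh 0 b)
  (EP (emul (EFst (EV 1)) (EFst (EV 0))) (epred (emul (ES (ESnd (EV 1))) (ES (ESnd (EV 0))))))).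
Lemma eval_qmul r a b : eval r (eqmul a b) = qmul (eval r a) (eval r b).
Proof.
  unfold eqmul, qmul. rewrite !eval_ELet. ev_simp. rewrite eval_mul, eval_pred, eval_mul. ev_simp.
  rewrite Nat.sub_1_r. reflexivity.
Qed.

Definition eqadd a b := ELet a (ELet (sh 0 b)
  (EP (eadd (emul (EFst (EV 1)) (ES (ESnd (EV 0)))) (emul (EFst (EV 0)) (ES (ESnd (EV 1)))))
      (epred (emul (ES (ESnd (EV 1))) (ES (ESnd (EV 0))))))).
Lemma eval_qadd r a b : eval r (eqadd a b) = qadd (eval r a) (eval r b).
Proof.
  unfold eqadd, qadd. rewrite !eval_ELet. ev_simp. rewrite eval_add, !eval_mul, eval_pred, eval_mul. ev_simp.
  rewrite Nat.sub_1_r. reflexivity.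
Qed.

Definition eqmax a b := ELet a (ELet (sh 0 b)
  (eifz (eleb (emul (EFst (EV 1)) (ES (ESnd (EV 0)))) (emul (EFst (EV 0)) (ES (ESnd (EV 1))))) (EV 1) (EV 0))).
Lemma eval_qmax r a b : eval r (eqmax a b) = qmax (eval r a) (eval r b).
Proof.
  unfold eqmax, qmax. rewrite !eval_ELet. ev_simp. rewrite eval_ifz, eval_leb, !eval_mul. ev_simp.
  destruct (Nat.leb _ _); reflexivity.
Qed.

Definition eqpos a := ELet a (EP (eifz (eeqb (emod (EFst (EV 0)) (econst 2)) EZ) EZ (ediv (EFst (EV 0)) (econst 2))) (ESnd (EV 0))).
Lemma eval_qpos r a : eval r (eqpos a) = qpos (eval r a).
Proof.
  unfold eqpos, qpos. rewrite eval_ELet. ev_simp. rewrite eval_ifz, eval_eqb, eval_mod, eval_div; ev_simp;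
    rewrite ?eval_const; try lia.
  destruct (Nat.eqb _ 0); reflexivity.
Qed.

Definition eqonep a := ELet a (EP (eifz (eeqb (emod (EFst (EV 0)) (econst 2)) EZ)
   (esub (ES (ESnd (EV 0))) (ediv (ES (EFst (EV 0))) (econst 2)))
   (eadd (ES (ESnd (EV 0))) (ediv (EFst (EV 0)) (econst 2)))) (ESnd (EV 0))).
Lemma eval_qonep r a : eval r (eqonep a) = qonep (eval r a).
Proof.
  unfold eqonep, qonep. rewrite eval_ELet. ev_simp.
  rewrite eval_ifz, eval_eqb, eval_mod, eval_sub, eval_add, !eval_div; ev_simp; rewrite ?eval_const; try lia.
  rewrite Nat.add_1_r. destruct (Nat.eqb _ 0); reflexivity.
Qed.

Definition eqout a := ELet a (EP (eadd (EFst (EV 0)) (EFst (EV 0))) (ESnd (EV 0))).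
Lemma eval_qout r a : eval r (eqout a) = qout (eval r a).
Proof. unfold eqout, qout. rewrite eval_ELet. ev_simp. rewrite eval_add. ev_simp. f_equal. lia. Qed.

Definition eqone := EP (econst 1) EZ.
Lemma eval_qone r : eval r eqone = qone.
Proof. unfold eqone. ev_simp. rewrite eval_const. reflexivity. Qed.

End D2.
Import D2.

Module D3.
Import ListNotations.
Local Open Scope R_scope.

Lemma snds_S' k x : snds (S k) x = snds k (un2 x).
Proof. rewrite <- Nat.add_1_r, snds_add. reflexivity. Qed.

Definition build (E : nat) (f : nat -> nat) : nat := iterR 0 (fun c l => npair (f c) l) E.
Definition look (E L c : nat) : nat := un1 (snds (E - 1 - c) L).

Lemma look_build E f c : (c < E)%nat -> look E (build E f) c = f c.
Proof.
  unfold look. induction E as [|E IH]; intros H; [lia|]. cbn [build iterR]. fold (build E f).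
  destruct (Nat.eq_dec c E) as [->|Hne].
  - replace (S E - 1 - E)%nat with 0%nat by lia. simpl. apply un1_pair.
  - replace (S E - 1 - c)%nat with (S (E - 1 - c)) by lia. rewrite snds_S', un2_pair. apply IH. lia.
Qed.

Lemma build_ext E f1 f2 : (forall c, f1 c = f2 c) -> build E f1 = build E f2.
Proof. intros H. unfold build. apply iterR_ext. intros; rewrite H; reflexivity. Qed.

Section WDef.
Variables hA g1 g2 g3 g4 : nat -> nat.

Definition inAb (n j c : nat) : bool :=
  ((S c <=? j)%nat && existsb (fun i => (hA (npair (npair (S n) c) i) =? 0)%nat) (seq 0 j))%bool.
Definition inFb (n j e : nat) : bool :=
  existsb (fun m => inAb n j (prefc e m)) (seq 0 (S (lenf e))).

Definition comb (j e f1 f0 : nat) : nat :=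
  qmax (qadd (qmul (qpos (g3 (npair e j))) f1) (qmul (qonep (g4 (npair e j))) f0))
       (qadd (qmul (qpos (g1 (npair e j))) f1) (qmul (qonep (g2 (npair e j))) f0)).

Definition leafW (n j c : nat) : nat := if inFb n j c then qone else 0%nat.
Definition stepW (n j E L c : nat) : nat :=
  if inFb n j c then qone else comb j c (look E L (childf c 1)) (look E L (childf c 0)).
Definition levels (n j E d : nat) : nat :=
  iterR (build E (leafW n j)) (fun _ L => build E (stepW n j E L)) d.
Definition Wc (n j e : nat) : nat := look (2 ^ S (e + j)) (levels n j (2 ^ S (e + j)) j) e.

Definition cH (j : nat) (u : situation) : R := rq (qpos (g3 (npair (encS u) j))).
Definition dH (j : nat) (u : situation) : R := rq (qonep (g4 (npair (encS u) j))).
Definition cL (j : nat) (u : situation) : R := rq (qpos (g1 (npair (encS u) j))).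
Definition dL (j : nat) (u : situation) : R := rq (qonep (g2 (npair (encS u) j))).

Fixpoint Wr (n j d : nat) (u : situation) : R :=
  if inFb n j (encS u) then 1 else
  match d with
  | O => 0
  | S d' => Rmax (cH j u * Wr n j d' (u ++ [true]) + dH j u * Wr n j d' (u ++ [false]))
                 (cL j u * Wr n j d' (u ++ [true]) + dL j u * Wr n j d' (u ++ [false]))
  end.

Lemma encS_lt u Lm : (length u < Lm)%nat -> (encS u < 2 ^ Lm)%nat.
Proof.
  intros H. pose proof (encS_bounds u) as [_ B]. assert (2 ^ S (length u) <= 2 ^ Lm)%nat.
  { apply Nat.pow_le_mono_r; [lia|exact H]. } pose proof (Nat.pow_nonzero 2 Lm). lia.
Qed.

Lemma levels_ok n j Lm d : forall u, (length u + d < Lm)%nat ->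
  rq (look (2 ^ Lm) (levels n j (2 ^ Lm) d) (encS u)) = Wr n j d u.
Proof.
  induction d as [|d IH]; intros u Hu.
  - unfold levels. cbn [iterR]. rewrite look_build by (apply encS_lt; lia).
    unfold leafW. simpl. destruct (inFb n j (encS u)); [apply rq_qone|apply rq_zero].
  - unfold levels. cbn [iterR]. fold (levels n j (2 ^ Lm) d).
    rewrite look_build by (apply encS_lt; lia).
    unfold stepW. cbn [Wr]. destruct (inFb n j (encS u)); [apply rq_qone|].
    unfold comb. rewrite rq_max, !rq_add, !rq_mul.
    replace (childf (encS u) 1) with (childf (encS u) (b2n true)) by reflexivity.
    replace (childf (encS u) 0) with (childf (encS u) (b2n false)) by reflexivity.
    rewrite !childf_encS, !IH by (rewrite length_app; simpl; lia).
    reflexivity.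
Qed.

Lemma Wc_ok n j u : rq (Wc n j (encS u)) = Wr n j j u.
Proof.
  unfold Wc. apply levels_ok. pose proof (encS_ge_len u). lia.
Qed.

Definition Tc (x : nat) : nat :=
  qout (if (un1 x =? 0)%nat then qone else iterR 0%nat (fun n acc => qadd acc (Wc n (un2 x) (un1 x))) (un2 x)).

Fixpoint rsum (f : nat -> R) (n : nat) : R := match n with O => 0 | S n' => rsum f n' + f n' end.

Definition Tapx (u : situation) (j : nat) : R :=
  match u with [] => 1 | _ => rsum (fun n => Wr n j j u) j end.

Lemma Tc_ok u j : decQ (Tc (npair (encS u) j)) = Tapx u j.
Proof.
  unfold Tc. rewrite decQ_qout, un1_pair, un2_pair. destruct u as [|b u'].
  - simpl. apply rq_qone.
  - replace (encS (b :: u') =? 0)%nat with false by (simpl; destruct b; symmetry; apply Nat.eqb_neq; lia).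
    unfold Tapx. assert (G : forall k, rq (iterR 0 (fun n acc => qadd acc (Wc n j (encS (b :: u')))) k) =
       rsum (fun n => Wr n j j (b :: u')) k).
    { induction k as [|k IH]; cbn [iterR rsum].
      + apply rq_zero.
      + rewrite rq_add, IH, Wc_ok. reflexivity. }
    apply G.
Qed.

End WDef.

End D3.
Import D3.

Module D4.
Import ListNotations.
Local Open Scope nat_scope.

Lemma b2n_neq0 b : negb (b2n b =? 0) = b.
Proof. destruct b; reflexivity. Qed.

Lemma existsb_ext' {A} (f g : A -> bool) l : (forall x, f x = g x) -> existsb f l = existsb g l.
Proof. intros H; induction l; simpl; [reflexivity|]. rewrite H, IHl. reflexivity. Qed.

Definition ebex N P := ERec N EZ (eifz (EV 0) (eifz (sh 0 P) EZ (econst 1)) (econst 1)).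
Lemma eval_bex r N P : eval r (ebex N P) =
  b2n (existsb (fun i => negb (eval (npair i r) P =? 0)) (seq 0 (eval r N))).
Proof.
  unfold ebex. rewrite eval_rec.
  rewrite (iterR_ext _ _ (fun i acc => match acc with O => match eval (npair i r) P with O => O | S _ => 1 end | S _ => 1 end))
    by (intros; rewrite !eval_ifz; ev_simp; rewrite ?eval_const; reflexivity).
  ev_simp. generalize (eval r N). intros m. induction m as [|m IH]; [reflexivity|].
  cbn [iterR]. rewrite IH, seq_S, existsb_app. simpl.
  destruct (existsb _ (seq 0 m)); simpl; [reflexivity|].
  destruct (eval (npair m r) P); reflexivity.
Qed.

Fixpoint calls (e : pexp) : list (nat -> nat) :=
  match e with
  | EZ | EV _ => nil
  | ES a | EFst a | ESnd a => calls a
  | EP a b | ELet a b => calls a ++ calls b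
  | ECall g a => g :: calls a
  | ERec n b s => calls n ++ calls b ++ calls s
  end.

Lemma calls_ok e : (forall g, In g (calls e) -> recursive g) -> oracles_ok e.
Proof.
  induction e; simpl; intros H; repeat split;
    try (apply IHe; intros; apply H; auto using in_or_app; fail);
    try (apply IHe1; intros; apply H; auto using in_or_app; fail);
    try (apply IHe2; intros; apply H; auto using in_or_app; fail);
    try (apply IHe3; intros; apply H; auto using in_or_app; fail); auto.
  all: try (apply IHe2; intros; apply H; apply in_or_app; right; apply in_or_app; auto).
  all: try (apply IHe3; intros; apply H; apply in_or_app; right; apply in_or_app; auto).
Qed.

Section Exps.
Variables hA g1 g2 g3 g4 : nat -> nat.

Definition einA n j c := ELet n (ELet (sh 0 j) (ELet (sh 0 (sh 0 c))
  (eand (eleb (ES (EV 0)) (EV 1)) (ebex (EV 1) (eeqb (ECall hA (EP (EP (ES (EV 3)) (EV 1)) (EV 0))) EZ))))).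
Lemma eval_inA r n j c : eval r (einA n j c) = b2n (inAb hA (eval r n) (eval r j) (eval r c)).
Proof.
  unfold einA, inAb. rewrite !eval_ELet, !eval_sh0. rewrite eval_and, eval_leb, eval_bex. ev_simp.
  rewrite !b2n_neq0. f_equal. f_equal. apply existsb_ext'. intros i.
  rewrite eval_eqb. ev_simp. apply b2n_neq0.
Qed.

Definition elen e := ELet e (ESnd (ERec (EV 0) (EP (EV 0) EZ)
  (eifz (EFst (EV 0)) (EV 0) (EP (ediv (epred (EFst (EV 0))) (econst 2)) (ES (ESnd (EV 0))))))).
Lemma eval_len r e : eval r (elen e) = lenf (eval r e).
Proof.
  unfold elen, lenf. rewrite eval_ELet, eval_ESnd, eval_rec. ev_simp. f_equal.
  apply iterR_ext. intros k x. rewrite eval_ifz. ev_simp. unfold lenstep.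
  destruct (un1 x) eqn:E; [reflexivity|]. rewrite eval_div by (rewrite eval_const; lia).
  ev_simp. rewrite eval_pred, eval_const. ev_simp. rewrite E. simpl. rewrite Nat.sub_0_r. reflexivity.
Qed.

Definition eprefc e m := ELet e (ELet (sh 0 m)
  (eadd (emod (esub (EV 1) (epred (epow (econst 2) (EV 0)))) (epow (econst 2) (EV 0))) (epred (epow (econst 2) (EV 0))))).
Lemma eval_prefc r e m : eval r (eprefc e m) = prefc (eval r e) (eval r m).
Proof.
  unfold eprefc, prefc. rewrite !eval_ELet, !eval_sh0. rewrite eval_add, eval_mod, eval_sub, !eval_pred, !eval_pow.
  - ev_simp. rewrite eval_const, Nat.sub_1_r. reflexivity.
  - rewrite eval_pow, eval_const. apply Nat.neq_0_lt_0, Nat.pow_nonzero. lia.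
Qed.

Definition einF n j e := ELet n (ELet (sh 0 j) (ELet (sh 0 (sh 0 e))
  (ebex (ES (elen (EV 0))) (einA (EV 3) (EV 2) (eprefc (EV 1) (EV 0)))))).
Lemma eval_inF r n j e : eval r (einF n j e) = b2n (inFb hA (eval r n) (eval r j) (eval r e)).
Proof.
  unfold einF, inFb. rewrite !eval_ELet, !eval_sh0. rewrite eval_bex. ev_simp. rewrite eval_len. ev_simp.
  f_equal. apply existsb_ext'. intros m. rewrite eval_inA, eval_prefc. ev_simp. apply b2n_neq0.
Qed.

Definition echild e b := ELet e (ELet (sh 0 b) (eadd (EV 1) (emul (epow (econst 2) (elen (EV 1))) (ES (EV 0))))).
Lemma eval_child r e b : eval r (echild e b) = childf (eval r e) (eval r b).
Proof.
  unfold echild, childf. rewrite !eval_ELet, !eval_sh0. rewrite eval_add, eval_mul, eval_pow, eval_len, eval_const.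
  ev_simp. reflexivity.
Qed.

Definition ecomb j e f1 f0 :=
  eqmax (eqadd (eqmul (eqpos (ECall g3 (EP e j))) f1) (eqmul (eqonep (ECall g4 (EP e j))) f0))
        (eqadd (eqmul (eqpos (ECall g1 (EP e j))) f1) (eqmul (eqonep (ECall g2 (EP e j))) f0)).
Lemma eval_comb r j e f1 f0 : eval r (ecomb j e f1 f0) =
  comb g1 g2 g3 g4 (eval r j) (eval r e) (eval r f1) (eval r f0).
Proof.
  unfold ecomb, comb. rewrite eval_qmax, !eval_qadd, !eval_qmul, !eval_qpos, !eval_qonep. ev_simp. reflexivity.
Qed.

Definition ebuild E F := ERec E EZ (EP (sh 0 F) (EV 0)).
Lemma eval_build r E F : eval r (ebuild E F) = build (eval r E) (fun c => eval (npair c r) F).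
Proof.
  unfold ebuild, build. rewrite eval_rec. ev_simp. apply iterR_ext. intros k x. ev_simp.
  reflexivity.
Qed.

Definition elook E L c := ELet E (ELet (sh 0 L) (ELet (sh 0 (sh 0 c))
  (EFst (ERec (esub (epred (EV 2)) (EV 0)) (EV 1) (ESnd (EV 0)))))).
Lemma eval_look r E L c : eval r (elook E L c) = look (eval r E) (eval r L) (eval r c).
Proof.
  unfold elook, look. rewrite !eval_ELet, !eval_sh0, eval_EFst, eval_rec. rewrite eval_sub, eval_pred. ev_simp.
  rewrite Nat.sub_1_r. f_equal. generalize (pred (eval r E) - eval r c). intros m.
  induction m as [|m IH]; cbn [iterR]; [reflexivity|]. ev_simp. rewrite IH. reflexivity.
Qed.

Definition elevels D E L0 F := ERec D L0 (ebuild (sh 0 (sh 0 E)) F).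
Lemma eval_levels r D E L0 F : eval r (elevels D E L0 F) =
  iterR (eval r L0) (fun d L => build (eval r E) (fun c => eval (npair c (npair L (npair d r))) F)) (eval r D).
Proof.
  unfold elevels. rewrite eval_rec. apply iterR_ext. intros d L. rewrite eval_build.
  rewrite !eval_sh0. reflexivity.
Qed.

Definition leafF := eifz (einF (EV 4) (EV 3) (EV 0)) EZ eqone.
Definition stepF := eifz (einF (EV 6) (EV 5) (EV 0))
   (ecomb (EV 5) (EV 0) (elook (EV 3) (EV 1) (echild (EV 0) (econst 1))) (elook (EV 3) (EV 1) (echild (EV 0) EZ)))
   eqone.
Definition ewc n j e := ELet n (ELet (sh 0 j) (ELet (sh 0 (sh 0 e))
  (ELet (epow (econst 2) (ES (eadd (EV 0) (EV 1))))
    (ELet (elevels (EV 2) (EV 0) (ebuild (EV 0) leafF) stepF) (elook (EV 1) (EV 0) (EV 2)))))).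

Lemma eval_wc r n j e : eval r (ewc n j e) = Wc hA g1 g2 g3 g4 (eval r n) (eval r j) (eval r e).
Proof.
  unfold ewc, Wc. rewrite !eval_ELet, !eval_sh0. rewrite eval_look. ev_simp.
  rewrite eval_levels, eval_build, eval_pow, eval_const. ev_simp. rewrite eval_add. ev_simp.
  set (E := 2 ^ S (eval r e + eval r j)).
  unfold levels. f_equal.
  set (ρ := npair E (npair (eval r e) (npair (eval r j) (npair (eval r n) r)))).
  assert (HL : build E (fun c => eval (npair c ρ) leafF) = build E (leafW hA (eval r n) (eval r j))).
  { apply build_ext. intros c. unfold leafF, leafW. rewrite eval_ifz, eval_inF. unfold ρ. ev_simp.
    destruct (inFb _ _ _ _); cbn [b2n]; [rewrite eval_qone; reflexivity|reflexivity]. }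
  rewrite HL. apply iterR_ext. intros d L. apply build_ext. intros c.
  unfold stepF, stepW. rewrite eval_ifz, eval_inF. unfold ρ. ev_simp.
  destruct (inFb _ _ _ _); cbn [b2n]; [rewrite eval_qone; reflexivity|].
  rewrite eval_comb, !eval_look, !eval_child, eval_const. ev_simp. reflexivity.
Qed.

Definition eTc := ELet (EFst (EV 0)) (ELet (ESnd (EV 1))
  (eqout (eifz (EV 1) eqone (ERec (EV 0) EZ (eqadd (EV 0) (ewc (EV 1) (EV 2) (EV 3))))))).

Lemma eval_Tc x : eval (npair x 0) eTc = Tc hA g1 g2 g3 g4 x.
Proof.
  unfold eTc, Tc. rewrite !eval_ELet, eval_qout, eval_ifz. ev_simp.
  destruct (un1 x) eqn:Ex; cbn [Nat.eqb]; [rewrite eval_qone; reflexivity|].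
  rewrite eval_rec. ev_simp. f_equal. apply iterR_ext. intros k acc. rewrite eval_qadd, eval_wc. ev_simp.
  reflexivity.
Qed.

Lemma Tc_recursive : recursive hA -> recursive g1 -> recursive g2 -> recursive g3 -> recursive g4 ->
  recursive (Tc hA g1 g2 g3 g4).
Proof.
  intros H0 H1 H2 H3 H4.
  assert (R := compile_rec eTc). destruct R as [c Hc].
  - apply calls_ok. intros g Hg. vm_compute in Hg.
    repeat (destruct Hg as [<-|Hg]; [assumption|]). destruct Hg.
  - exists c. intros x. destruct (Hc x) as [k Hk]. exists k. rewrite Hk. f_equal. apply eval_Tc.
Qed.

End Exps.

End D4.
Import D4.

Module E1.
Import ListNotations.
Local Open Scope R_scope.

Lemma lim_Rmax0 (f : nat -> R) l : is_lim_seq f (Finite l) -> is_lim_seq (fun n => Rmax (f n) 0) (Finite (Rmax l 0)).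
Proof.
  intros H.
  assert (E : forall x, Rmax x 0 = (x + Rabs x) / 2).
  { intros x. unfold Rmax, Rabs. destruct (Rle_dec x 0); destruct (Rcase_abs x); lra. }
  apply is_lim_seq_ext with (fun n => (f n + Rabs (f n)) / 2); [intros; rewrite E; reflexivity|].
  rewrite E. unfold Rdiv.
  apply is_lim_seq_mult'; [|apply is_lim_seq_const].
  apply is_lim_seq_plus'; [exact H|]. apply (is_lim_seq_abs _ (Finite l) H).
Qed.

Fixpoint rsum_le f g k : (forall n, (n < k)%nat -> f n <= g n) -> rsum f k <= rsum g k.
Proof.
  destruct k as [|k]; intros H; simpl; [lra|].
  apply Rplus_le_compat; [apply rsum_le; intros; apply H; lia|apply H; lia].
Qed.

Lemma rsum_nonneg f k : (forall n, 0 <= f n) -> 0 <= rsum f k.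
Proof. intros H; induction k; simpl; [lra|]. specialize (H k). lra. Qed.

Lemma rsum_lin a b f g k : a * rsum f k + b * rsum g k = rsum (fun n => a * f n + b * g n) k.
Proof. induction k; simpl; [lra|]. rewrite <- IHk. ring. Qed.

Lemma rsum_geom k : rsum (fun n => / 2 ^ S n) k = 1 - / 2 ^ k.
Proof.
  induction k; cbn [rsum]; [simpl; lra|]. rewrite IHk. simpl. field. apply pow_nonzero. lra.
Qed.

Lemma rsum_ge_count f k N : (N <= k)%nat -> (forall n, 0 <= f n) -> (forall n, (n < N)%nat -> 1 <= f n) ->
  INR N <= rsum f k.
Proof.
  intros Hk H0 H1.
  assert (G : forall k, INR (Nat.min N k) <= rsum f k).
  { induction k0 as [|k0 IH]; cbn [rsum].
    - rewrite Nat.min_0_r. simpl. lra.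
    - destruct (Nat.lt_ge_cases k0 N).
      + replace (Nat.min N (S k0)) with (S (Nat.min N k0)) by lia. rewrite S_INR.
        specialize (H1 k0 H). lra.
      + replace (Nat.min N (S k0)) with (Nat.min N k0) by lia. specialize (H0 k0). lra. }
  specialize (G k). replace (Nat.min N k) with N in G by lia. exact G.
Qed.

Section Dir1.
Variable phi : forecasting_system.
Hypothesis Hnd : non_degenerate phi.
Variables hA g1 g2 g3 g4 : nat -> nat.
Variable A : nat -> situation -> Prop.
Hypothesis HA : forall n s, A n s <-> exists k, hA (npair (npair n (encS s)) k) = 0%nat.
Hypothesis Hbound : forall n, Rbar_le (upper_prob phi (cylinder_set (A n))) (Finite (/ 2 ^ n)).
Hypothesis H1m : forall s n, decQ (g1 (npair (encS s) n)) <= decQ (g1 (npair (encS s) (S n))).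
Hypothesis H1l : forall s, is_lim_seq (fun n => decQ (g1 (npair (encS s) n))) (Finite (fs_lo phi s)).
Hypothesis H2m : forall s n, decQ (g2 (npair (encS s) n)) <= decQ (g2 (npair (encS s) (S n))).
Hypothesis H2l : forall s, is_lim_seq (fun n => decQ (g2 (npair (encS s) n))) (Finite (- fs_lo phi s)).
Hypothesis H3m : forall s n, decQ (g3 (npair (encS s) n)) <= decQ (g3 (npair (encS s) (S n))).
Hypothesis H3l : forall s, is_lim_seq (fun n => decQ (g3 (npair (encS s) n))) (Finite (fs_hi phi s)).
Hypothesis H4m : forall s n, decQ (g4 (npair (encS s) n)) <= decQ (g4 (npair (encS s) (S n))).
Hypothesis H4l : forall s, is_lim_seq (fun n => decQ (g4 (npair (encS s) n))) (Finite (- fs_hi phi s)).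

Notation lo := (fs_lo phi).
Notation hi := (fs_hi phi).
Notation W := (Wr hA g1 g2 g3 g4).
Notation cH := (cH g3). Notation dH := (dH g4). Notation cL := (cL g1). Notation dL := (dL g2).

Lemma mono_le (f : nat -> R) : (forall n, f n <= f (S n)) -> forall a b, (a <= b)%nat -> f a <= f b.
Proof. intros H a b Hab. induction Hab; [lra|]. specialize (H m). lra. Qed.

Lemma cH_bounds j u : 0 <= cH j u <= hi u.
Proof.
  unfold D3.cH. rewrite rq_pos. pose proof (is_lim_seq_incr_compare _ _ (H3l u) (H3m u) j).
  pose proof (fs_lo_ge0 phi u). pose proof (fs_lo_le_hi phi u).
  unfold Rmax. destruct (Rle_dec _ _); lra.
Qed.
Lemma dH_bounds j u : 0 <= dH j u <= 1 - hi u.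
Proof.
  unfold D3.dH. rewrite rq_onep. pose proof (is_lim_seq_incr_compare _ _ (H4l u) (H4m u) j).
  pose proof (fs_hi_le1 phi u). unfold Rmax. destruct (Rle_dec _ _); lra.
Qed.
Lemma cL_bounds j u : 0 <= cL j u <= lo u.
Proof.
  unfold D3.cL. rewrite rq_pos. pose proof (is_lim_seq_incr_compare _ _ (H1l u) (H1m u) j).
  pose proof (fs_lo_ge0 phi u). unfold Rmax. destruct (Rle_dec _ _); lra.
Qed.
Lemma dL_bounds j u : 0 <= dL j u <= 1 - lo u.
Proof.
  unfold D3.dL. rewrite rq_onep. pose proof (is_lim_seq_incr_compare _ _ (H2l u) (H2m u) j).
  pose proof (fs_lo_le_hi phi u). pose proof (fs_hi_le1 phi u). unfold Rmax. destruct (Rle_dec _ _); lra.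
Qed.

Lemma Rmax_mono a b c d : a <= c -> b <= d -> Rmax a b <= Rmax c d.
Proof. intros. unfold Rmax. destruct (Rle_dec a b), (Rle_dec c d); lra. Qed.

Lemma cH_mono j u : cH j u <= cH (S j) u.
Proof. unfold D3.cH. rewrite !rq_pos. apply Rmax_mono; [apply H3m|lra]. Qed.
Lemma dH_mono j u : dH j u <= dH (S j) u.
Proof. unfold D3.dH. rewrite !rq_onep. apply Rmax_mono; [specialize (H4m u j); lra|lra]. Qed.
Lemma cL_mono j u : cL j u <= cL (S j) u.
Proof. unfold D3.cL. rewrite !rq_pos. apply Rmax_mono; [apply H1m|lra]. Qed.
Lemma dL_mono j u : dL j u <= dL (S j) u.
Proof. unfold D3.dL. rewrite !rq_onep. apply Rmax_mono; [specialize (H2m u j); lra|lra]. Qed.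

Lemma cH_lim u : is_lim_seq (fun j => cH j u) (Finite (hi u)).
Proof.
  unfold D3.cH. apply is_lim_seq_ext with (fun j => Rmax (decQ (g3 (npair (encS u) j))) 0).
  { intros; rewrite rq_pos; reflexivity. }
  assert (E : Rmax (hi u) 0 = hi u) by (apply Rmax_left; pose proof (fs_lo_ge0 phi u); pose proof (fs_lo_le_hi phi u); lra).
  rewrite <- E. apply lim_Rmax0, H3l.
Qed.
Lemma dH_lim u : is_lim_seq (fun j => dH j u) (Finite (1 - hi u)).
Proof.
  unfold D3.dH. apply is_lim_seq_ext with (fun j => Rmax (1 + decQ (g4 (npair (encS u) j))) 0).
  { intros; rewrite rq_onep; reflexivity. }
  replace (1 - hi u) with (Rmax (1 + - hi u) 0) by (rewrite Rmax_left; pose proof (fs_hi_le1 phi u); lra).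
  apply lim_Rmax0. apply (is_lim_seq_plus' (fun _ => 1)); [apply is_lim_seq_const|apply H4l].
Qed.
Lemma cL_lim u : is_lim_seq (fun j => cL j u) (Finite (lo u)).
Proof.
  unfold D3.cL. apply is_lim_seq_ext with (fun j => Rmax (decQ (g1 (npair (encS u) j))) 0).
  { intros; rewrite rq_pos; reflexivity. }
  assert (E : Rmax (lo u) 0 = lo u) by (apply Rmax_left; pose proof (fs_lo_ge0 phi u); lra).
  rewrite <- E. apply lim_Rmax0, H1l.
Qed.
Lemma dL_lim u : is_lim_seq (fun j => dL j u) (Finite (1 - lo u)).
Proof.
  unfold D3.dL. apply is_lim_seq_ext with (fun j => Rmax (1 + decQ (g2 (npair (encS u) j))) 0).
  { intros; rewrite rq_onep; reflexivity. }
  replace (1 - lo u) with (Rmax (1 + - lo u) 0) by (rewrite Rmax_left; pose proof (fs_lo_le_hi phi u); pose proof (fs_hi_le1 phi u); lra).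
  apply lim_Rmax0. apply (is_lim_seq_plus' (fun _ => 1)); [apply is_lim_seq_const|apply H2l].
Qed.

Lemma inAb_spec n j c : inAb hA n j c = true <->
  (c < j)%nat /\ exists k, (k < j)%nat /\ hA (npair (npair (S n) c) k) = 0%nat.
Proof.
  unfold inAb. rewrite Bool.andb_true_iff, Nat.leb_le, existsb_exists. split.
  - intros [H1 [k [Hk Hz]]]. apply in_seq in Hk. apply Nat.eqb_eq in Hz. split; [lia|]. exists k. split; [lia|exact Hz].
  - intros [H1 [k [Hk Hz]]]. split; [lia|]. exists k. split; [apply in_seq; lia|apply Nat.eqb_eq; exact Hz].
Qed.

Lemma inFb_spec n j u : inFb hA n j (encS u) = true <->
  exists m, (m <= length u)%nat /\ inAb hA n j (encS (firstn m u)) = true.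
Proof.
  unfold inFb. rewrite lenf_encS, existsb_exists. split.
  - intros [m [Hm H]]. apply in_seq in Hm. exists m. split; [lia|]. rewrite <- prefc_encS by lia. exact H.
  - intros [m [Hm H]]. exists m. split; [apply in_seq; lia|]. rewrite prefc_encS by lia. exact H.
Qed.

Lemma inFb_mono n j u : inFb hA n j (encS u) = true -> inFb hA n (S j) (encS u) = true.
Proof.
  rewrite !inFb_spec. intros [m [Hm H]]. exists m. split; [exact Hm|].
  apply inAb_spec in H. apply inAb_spec. destruct H as [Hc [k [Hk Hz]]]. split; [lia|]. exists k. split; [lia|exact Hz].
Qed.

Lemma W_bounds n j d u : 0 <= W n j d u <= 1.
Proof.
  revert u; induction d as [|d IH]; intros u; simpl; destruct (inFb hA n j (encS u)); try lra.
  pose proof (IH (u ++ [true])). pose proof (IH (u ++ [false])).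
  pose proof (cH_bounds j u). pose proof (dH_bounds j u). pose proof (cL_bounds j u). pose proof (dL_bounds j u).
  pose proof (fs_lo_le_hi phi u).
  unfold Rmax. destruct (Rle_dec _ _); split; nra.
Qed.

Lemma W_mono_d n j d u : W n j d u <= W n j (S d) u.
Proof.
  revert u; induction d as [|d IH]; intros u.
  - simpl. destruct (inFb hA n j (encS u)); [lra|].
    pose proof (W_bounds n j 0 (u ++ [true])). pose proof (W_bounds n j 0 (u ++ [false])).
    pose proof (cH_bounds j u). pose proof (dH_bounds j u).
    apply Rle_trans with (cH j u * W n j 0 (u ++ [true]) + dH j u * W n j 0 (u ++ [false])); [nra|apply Rmax_l].
  - change (W n j (S d) u) with (if inFb hA n j (encS u) then 1 else
      Rmax (cH j u * W n j d (u ++ [true]) + dH j u * W n j d (u ++ [false]))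
           (cL j u * W n j d (u ++ [true]) + dL j u * W n j d (u ++ [false]))).
    change (W n j (S (S d)) u) with (if inFb hA n j (encS u) then 1 else
      Rmax (cH j u * W n j (S d) (u ++ [true]) + dH j u * W n j (S d) (u ++ [false]))
           (cL j u * W n j (S d) (u ++ [true]) + dL j u * W n j (S d) (u ++ [false]))).
    destruct (inFb hA n j (encS u)); [lra|].
    pose proof (IH (u ++ [true])). pose proof (IH (u ++ [false])).
    pose proof (cH_bounds j u). pose proof (dH_bounds j u). pose proof (cL_bounds j u). pose proof (dL_bounds j u).
    apply Rmax_mono; apply Rplus_le_compat; apply Rmult_le_compat_l; lra.
Qed.

Lemma W_mono_j n j d u : W n j d u <= W n (S j) d u.
Proof.
  revert u; induction d as [|d IH]; intros u; simpl.
  - destruct (inFb hA n j (encS u)) eqn:E.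
    + rewrite (inFb_mono _ _ _ E). lra.
    + destruct (inFb hA n (S j) (encS u)); lra.
  - destruct (inFb hA n j (encS u)) eqn:E.
    + rewrite (inFb_mono _ _ _ E). lra.
    + destruct (inFb hA n (S j) (encS u)).
      * pose proof (W_bounds n j (S d) u) as Hb. simpl in Hb. rewrite E in Hb. lra.
      * pose proof (IH (u ++ [true])). pose proof (IH (u ++ [false])).
        pose proof (W_bounds n j d (u ++ [true])). pose proof (W_bounds n j d (u ++ [false])).
        pose proof (cH_bounds j u). pose proof (dH_bounds j u). pose proof (cL_bounds j u). pose proof (dL_bounds j u).
        pose proof (cH_mono j u). pose proof (dH_mono j u). pose proof (cL_mono j u). pose proof (dL_mono j u).
        apply Rmax_mono; apply Rplus_le_compat; apply Rmult_le_compat; lra.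
Qed.

Lemma W_mono_jj n j : forall u, W n j j u <= W n (S j) (S j) u.
Proof.
  intros u. apply Rle_trans with (W n j (S j) u); [apply W_mono_d|apply W_mono_j].
Qed.

Lemma W_le_sm n j M' : supermartingale phi M' ->
  (forall w, Rbar_le (Finite (indicator (cylinder_set (A (S n))) w)) (LimInf_seq (fun k => M' (prefix w k)))) ->
  forall d u, W n j d u <= M' u.
Proof.
  intros HM HG d. induction d as [|d IH]; intros u.
  - simpl. destruct (inFb hA n j (encS u)) eqn:E.
    + apply (proj2 (sm_dom_bound phi M' _ u HM HG)).
      intros w' Hw'. apply inFb_spec in E. destruct E as [m [Hm HAb]].
      apply inAb_spec in HAb. destruct HAb as [_ [k [_ Hk]]].
      exists (firstn m u). split.
      * apply HA. exists k. exact Hk.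
      * unfold cylinder. rewrite length_firstn. replace (Nat.min m (length u)) with m by lia.
        rewrite <- Hw'. rewrite firstn_prefix by lia. reflexivity.
    + apply (proj1 (sm_dom_bound phi M' _ u HM HG)).
  - change (W n j (S d) u) with (if inFb hA n j (encS u) then 1 else
      Rmax (cH j u * W n j d (u ++ [true]) + dH j u * W n j d (u ++ [false]))
           (cL j u * W n j d (u ++ [true]) + dL j u * W n j d (u ++ [false]))).
    destruct (inFb hA n j (encS u)) eqn:E.
    + apply (proj2 (sm_dom_bound phi M' _ u HM HG)).
      intros w' Hw'. apply inFb_spec in E. destruct E as [m [Hm HAb]].
      apply inAb_spec in HAb. destruct HAb as [_ [k [_ Hk]]].
      exists (firstn m u). split.
      * apply HA. exists k. exact Hk.
      * unfold cylinder. rewrite length_firstn. replace (Nat.min m (length u)) with m by lia.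
        rewrite <- Hw'. rewrite firstn_prefix by lia. reflexivity.
    + destruct (proj1 (sm_iff phi M') HM u) as [HL HH].
      pose proof (IH (u ++ [true])). pose proof (IH (u ++ [false])).
      pose proof (W_bounds n j d (u ++ [true])). pose proof (W_bounds n j d (u ++ [false])).
      pose proof (cH_bounds j u). pose proof (dH_bounds j u). pose proof (cL_bounds j u). pose proof (dL_bounds j u).
      pose proof (fs_lo_ge0 phi u). pose proof (fs_lo_le_hi phi u). pose proof (fs_hi_le1 phi u).
      apply Rmax_lub.
      * apply Rle_trans with (hi u * M' (u ++ [true]) + (1 - hi u) * M' (u ++ [false])); [|exact HH].
        apply Rplus_le_compat; apply Rmult_le_compat; lra.
      * apply Rle_trans with (lo u * M' (u ++ [true]) + (1 - lo u) * M' (u ++ [false])); [|exact HL].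
        apply Rplus_le_compat; apply Rmult_le_compat; lra.
Qed.

Lemma W_root n j d : W n j d [] <= / 2 ^ S n.
Proof.
  specialize (Hbound (S n)). unfold upper_prob in Hbound.
  match type of Hbound with Rbar_le (Glb_Rbar ?E) _ => destruct (Glb_Rbar_correct E) as [_ Hg] end.
  assert (Hlb : Rbar_le (Finite (W n j d [])) (Glb_Rbar (fun v => exists M, supermartingale phi M /\
              (forall w, Rbar_le (Finite (indicator (cylinder_set (A (S n))) w))
                                 (LimInf_seq (fun n => M (prefix w n)))) /\ v = M []))).
  { apply Hg. intros x [M' [HM [HG ->]]]. simpl. apply (W_le_sm n j M' HM HG). }
  exact (Rbar_le_trans _ _ _ Hlb Hbound).
Qed.

Lemma W_step n j u :
  cH (S j) u * W n j j (u ++ [true]) + dH (S j) u * W n j j (u ++ [false]) <= W n (S j) (S j) u /\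
  cL (S j) u * W n j j (u ++ [true]) + dL (S j) u * W n j j (u ++ [false]) <= W n (S j) (S j) u.
Proof.
  pose proof (W_bounds n j j (u ++ [true])). pose proof (W_bounds n j j (u ++ [false])).
  pose proof (cH_bounds (S j) u). pose proof (dH_bounds (S j) u). pose proof (cL_bounds (S j) u). pose proof (dL_bounds (S j) u).
  change (W n (S j) (S j) u) with (if inFb hA n (S j) (encS u) then 1 else
      Rmax (cH (S j) u * W n (S j) j (u ++ [true]) + dH (S j) u * W n (S j) j (u ++ [false]))
           (cL (S j) u * W n (S j) j (u ++ [true]) + dL (S j) u * W n (S j) j (u ++ [false]))).
  destruct (inFb hA n (S j) (encS u)).
  - split; nra.
  - pose proof (W_mono_j n j j (u ++ [true])). pose proof (W_mono_j n j j (u ++ [false])).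
    split.
    + eapply Rle_trans; [|apply Rmax_l]. apply Rplus_le_compat; apply Rmult_le_compat_l; lra.
    + eapply Rle_trans; [|apply Rmax_r]. apply Rplus_le_compat; apply Rmult_le_compat_l; lra.
Qed.

Lemma W_cyl n t w0 : A (S n) t -> cylinder t w0 ->
  exists J, forall j m d, (J <= j)%nat -> (length t <= m)%nat -> W n j d (prefix w0 m) = 1.
Proof.
  intros HAt Hc. apply HA in HAt. destruct HAt as [k Hk].
  exists (S (Nat.max (encS t) k)). intros j m d Hj Hm.
  assert (Hin : inFb hA n j (encS (prefix w0 m)) = true).
  { apply inFb_spec. exists (length t). rewrite prefix_length. split; [exact Hm|].
    rewrite firstn_prefix by exact Hm. unfold cylinder in Hc. rewrite Hc.
    apply inAb_spec. split; [lia|]. exists k. split; [lia|exact Hk]. }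
  destruct d; simpl; rewrite Hin; reflexivity.
Qed.

Definition Ssum (j : nat) (u : situation) : R := rsum (fun n => W n j j u) j.

Lemma Ssum_nonneg j u : 0 <= Ssum j u.
Proof. apply rsum_nonneg. intros n. apply W_bounds. Qed.

Lemma Ssum_mono j u : Ssum j u <= Ssum (S j) u.
Proof.
  unfold Ssum. cbn [rsum]. pose proof (W_bounds j (S j) (S j) u).
  assert (rsum (fun n => W n j j u) j <= rsum (fun n => W n (S j) (S j) u) j).
  { apply rsum_le. intros; apply W_mono_jj. }
  lra.
Qed.

Lemma Ssum_mono_le a b u : (a <= b)%nat -> Ssum a u <= Ssum b u.
Proof. intros H. apply (mono_le (fun j => Ssum j u)); [intros; apply Ssum_mono|exact H]. Qed.

Lemma Ssum_root j : Ssum j [] <= 1.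
Proof.
  unfold Ssum. apply Rle_trans with (rsum (fun n => / 2 ^ S n) j).
  - apply rsum_le. intros; apply W_root.
  - rewrite rsum_geom. pose proof (pow_lt 2 j ltac:(lra)). assert (0 < / 2 ^ j) by (apply Rinv_0_lt_compat; lra). lra.
Qed.

Lemma Ssum_step j u :
  cH (S j) u * Ssum j (u ++ [true]) + dH (S j) u * Ssum j (u ++ [false]) <= Ssum (S j) u /\
  cL (S j) u * Ssum j (u ++ [true]) + dL (S j) u * Ssum j (u ++ [false]) <= Ssum (S j) u.
Proof.
  unfold Ssum. rewrite !rsum_lin. cbn [rsum]. pose proof (W_bounds j (S j) (S j) u).
  split.
  - assert (rsum (fun n => cH (S j) u * W n j j (u ++ [true]) + dH (S j) u * W n j j (u ++ [false])) j
            <= rsum (fun n => W n (S j) (S j) u) j) by (apply rsum_le; intros; apply W_step). lra.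
  - assert (rsum (fun n => cL (S j) u * W n j j (u ++ [true]) + dL (S j) u * W n j j (u ++ [false])) j
            <= rsum (fun n => W n (S j) (S j) u) j) by (apply rsum_le; intros; apply W_step). lra.
Qed.

Lemma eventually_ge (f : nat -> R) l : is_lim_seq f (Finite l) -> (forall n, f n <= f (S n)) -> 0 < l ->
  exists J, forall j, (J <= j)%nat -> l / 2 <= f j.
Proof.
  intros Hl Hm Hp. destruct (lim_gt_witness f l (l / 2) Hl ltac:(lra)) as [J HJ].
  exists J. intros j Hj. pose proof (mono_le f Hm J j Hj). lra.
Qed.

Lemma Ssum_bounded u : exists B, forall j, Ssum j u <= B.
Proof.
  induction u as [|x u IH] using rev_ind.
  - exists 1. apply Ssum_root.
  - destruct IH as [B HB]. destruct (Hnd u) as [Hlo Hhi].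
    destruct x.
    + destruct (eventually_ge (fun j => cH j u) (hi u) (cH_lim u) (fun j => cH_mono j u) Hhi) as [J HJ].
      exists (2 * B / hi u). intros j.
      assert (Hgen : forall j, (J <= j)%nat -> Ssum j (u ++ [true]) <= 2 * B / hi u).
      { intros j' Hj'. destruct (Ssum_step j' u) as [Hs _]. specialize (HJ (S j') ltac:(lia)).
        pose proof (dH_bounds (S j') u). pose proof (Ssum_nonneg j' (u ++ [false])).
        pose proof (Ssum_nonneg j' (u ++ [true])). specialize (HB (S j')).
        assert (hi u / 2 * Ssum j' (u ++ [true]) <= B) by nra.
        apply Rmult_le_reg_l with (hi u / 2); [lra|].
        replace (hi u / 2 * (2 * B / hi u)) with B by (field; lra). lra. }
      destruct (Nat.le_gt_cases J j).
      * apply Hgen; lia.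
      * eapply Rle_trans; [apply Ssum_mono_le with (b := J); lia|]. apply Hgen; lia.
    + assert (Hp : 0 < 1 - lo u) by lra.
      destruct (eventually_ge (fun j => dL j u) (1 - lo u) (dL_lim u) (fun j => dL_mono j u) Hp) as [J HJ].
      exists (2 * B / (1 - lo u)). intros j.
      assert (Hgen : forall j, (J <= j)%nat -> Ssum j (u ++ [false]) <= 2 * B / (1 - lo u)).
      { intros j' Hj'. destruct (Ssum_step j' u) as [_ Hs]. specialize (HJ (S j') ltac:(lia)).
        pose proof (cL_bounds (S j') u). pose proof (Ssum_nonneg j' (u ++ [false])).
        pose proof (Ssum_nonneg j' (u ++ [true])). specialize (HB (S j')).
        assert ((1 - lo u) / 2 * Ssum j' (u ++ [false]) <= B) by nra.
        apply Rmult_le_reg_l with ((1 - lo u) / 2); [lra|].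
        replace ((1 - lo u) / 2 * (2 * B / (1 - lo u))) with B by (field; lra). lra. }
      destruct (Nat.le_gt_cases J j).
      * apply Hgen; lia.
      * eapply Rle_trans; [apply Ssum_mono_le with (b := J); lia|]. apply Hgen; lia.
Qed.

Notation Tx := (Tapx hA g1 g2 g3 g4).

Lemma Tx_eq u j : u <> [] -> Tx u j = Ssum j u.
Proof. intros H. destruct u; [congruence|reflexivity]. Qed.

Lemma Tx_mono u j : Tx u j <= Tx u (S j).
Proof. destruct u as [|b u']; [simpl; lra|]. rewrite !Tx_eq by discriminate. apply Ssum_mono. Qed.

Lemma Tx_bounded u : exists B, forall j, Tx u j <= B.
Proof.
  destruct u as [|b u'].
  - exists 1. intros; simpl; lra.
  - destruct (Ssum_bounded (b :: u')) as [B HB]. exists B. intros j. rewrite Tx_eq by discriminate. apply HB.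
Qed.

Definition Tsm (u : situation) : R := real (Lim_seq (fun j => Tx u j)).

Lemma Tsm_lim u : is_lim_seq (fun j => Tx u j) (Finite (Tsm u)).
Proof.
  destruct (Tx_bounded u) as [B HB].
  destruct (ex_finite_lim_seq_incr _ B (Tx_mono u) HB) as [l Hl].
  unfold Tsm. replace (Lim_seq (fun j => Tx u j)) with (Finite l) by (symmetry; apply is_lim_seq_unique; exact Hl). exact Hl.
Qed.

Lemma Tx_le_Tsm u j : Tx u j <= Tsm u.
Proof. apply (is_lim_seq_incr_compare _ _ (Tsm_lim u) (Tx_mono u)). Qed.

Lemma Tsm_nonneg u : 0 <= Tsm u.
Proof.
  eapply Rle_trans; [|apply (Tx_le_Tsm u 0)]. destruct u; simpl; lra.
Qed.

Lemma Tsm_root : Tsm [] = 1.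
Proof.
  assert (H := Tsm_lim []). simpl in H.
  assert (H2 := is_lim_seq_const 1). pose proof (is_lim_seq_unique _ _ H). pose proof (is_lim_seq_unique _ _ H2).
  rewrite H0 in H1. injection H1. auto.
Qed.

Lemma Tx_step u j :
  cH (S j) u * Tx (u ++ [true]) j + dH (S j) u * Tx (u ++ [false]) j <= Tx u (S j) /\
  cL (S j) u * Tx (u ++ [true]) j + dL (S j) u * Tx (u ++ [false]) j <= Tx u (S j).
Proof.
  rewrite !(Tx_eq (u ++ _)) by (destruct u; discriminate).
  destruct (Ssum_step j u) as [H1 H2].
  destruct u as [|b u'].
  - pose proof (Ssum_root (S j)). simpl Tx. split; lra.
  - rewrite Tx_eq by discriminate. split; assumption.
Qed.

Lemma Tsm_sm : supermartingale phi Tsm.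
Proof.
  apply sm_iff. intros u. split.
  - assert (Hl : is_lim_seq (fun j => cL (S j) u * Tx (u ++ [true]) j + dL (S j) u * Tx (u ++ [false]) j)
                   (Finite (lo u * Tsm (u ++ [true]) + (1 - lo u) * Tsm (u ++ [false])))).
    { apply is_lim_seq_plus'; apply is_lim_seq_mult'; try apply Tsm_lim.
      - apply (is_lim_seq_incr_1 (fun j => cL j u)). apply cL_lim.
      - apply (is_lim_seq_incr_1 (fun j => dL j u)). apply dL_lim. }
    assert (Hr : is_lim_seq (fun j => Tx u (S j)) (Finite (Tsm u))) by (apply (is_lim_seq_incr_1 (fun j => Tx u j)); apply Tsm_lim).
    pose proof (is_lim_seq_le _ _ _ _ (fun j => proj2 (Tx_step u j)) Hl Hr). exact H.
  - assert (Hl : is_lim_seq (fun j => cH (S j) u * Tx (u ++ [true]) j + dH (S j) u * Tx (u ++ [false]) j)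
                   (Finite (hi u * Tsm (u ++ [true]) + (1 - hi u) * Tsm (u ++ [false])))).
    { apply is_lim_seq_plus'; apply is_lim_seq_mult'; try apply Tsm_lim.
      - apply (is_lim_seq_incr_1 (fun j => cH j u)). apply cH_lim.
      - apply (is_lim_seq_incr_1 (fun j => dH j u)). apply dH_lim. }
    assert (Hr : is_lim_seq (fun j => Tx u (S j)) (Finite (Tsm u))) by (apply (is_lim_seq_incr_1 (fun j => Tx u j)); apply Tsm_lim).
    pose proof (is_lim_seq_le _ _ _ _ (fun j => proj1 (Tx_step u j)) Hl Hr). exact H.
Qed.

Lemma Tsm_test : test_supermartingale phi Tsm.
Proof. split; [apply Tsm_sm|]. split; [apply Tsm_nonneg|apply Tsm_root]. Qed.

Lemma Tsm_lsc : recursive hA -> recursive g1 -> recursive g2 -> recursive g3 -> recursive g4 ->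
  lower_semicomputable Tsm.
Proof.
  intros R0 R1 R2 R3 R4. exists (Tc hA g1 g2 g3 g4). split; [apply Tc_recursive; assumption|].
  intros s. split.
  - intros n. rewrite !Tc_ok. apply Tx_mono.
  - apply is_lim_seq_ext with (fun j => Tx s j); [intros; rewrite Tc_ok; reflexivity|]. apply Tsm_lim.
Qed.

Lemma Tsm_unbounded w0 : (forall n, cylinder_set (A n) w0) -> forall B, exists m, B < Tsm (prefix w0 m).
Proof.
  intros Hw B.
  assert (Hall : forall N, exists J M, forall n j m d, (n < N)%nat -> (J <= j)%nat -> (M <= m)%nat ->
                   W n j d (prefix w0 m) = 1).
  { induction N as [|N IH].
    - exists 0%nat, 0%nat. intros; lia.
    - destruct IH as [J [M HJM]]. destruct (Hw (S N)) as [t [Ht Hc]].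
      destruct (W_cyl N t w0 Ht Hc) as [J' HJ'].
      exists (Nat.max J J'), (Nat.max M (length t)). intros n j m d Hn Hj Hm.
      destruct (Nat.eq_dec n N) as [->|Hne].
      + apply HJ'; lia.
      + apply HJM; lia. }
  destruct (INR_unbounded B) as [N HN].
  destruct (Hall N) as [J [M HJM]].
  set (m := S M). set (j := Nat.max J N).
  exists m.
  assert (Hs : INR N <= Ssum j (prefix w0 m)).
  { apply rsum_ge_count; [lia| intros; apply W_bounds |].
    intros n Hn. rewrite HJM by lia. lra. }
  assert (Hne : prefix w0 m <> []) by (intros E; pose proof (prefix_length w0 m) as L; rewrite E in L; simpl in L; lia).
  pose proof (Tx_le_Tsm (prefix w0 m) j) as HT. rewrite Tx_eq in HT by exact Hne.
  lra.
Qed.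

End Dir1.

End E1.
Import E1.

Module F.
Local Open Scope R_scope.

Theorem dir_ML_to_test phi w : non_degenerate phi -> computable_fs phi -> ML_random phi w -> ML_test_random phi w.
Proof.
  intros Hnd [[Hlo Hnlo] [Hhi Hnhi]] HR A [[hA [RhA HAeq]] Hb] Hw.
  destruct Hlo as [g1 [R1 H1]]. destruct Hnlo as [g2 [R2 H2]].
  destruct Hhi as [g3 [R3 H3]]. destruct Hnhi as [g4 [R4 H4]].
  assert (HAeq' : forall n s, A n s <-> exists k, hA (npair (npair n (encS s)) k) = 0%nat) by exact HAeq.
  pose proof (Tsm_test phi Hnd hA g1 g2 g3 g4 A HAeq' Hb
     (fun s => proj1 (H1 s)) (fun s => proj2 (H1 s)) (fun s => proj1 (H2 s)) (fun s => proj2 (H2 s))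
     (fun s => proj1 (H3 s)) (fun s => proj2 (H3 s)) (fun s => proj1 (H4 s)) (fun s => proj2 (H4 s))) as HT.
  pose proof (Tsm_lsc phi Hnd hA g1 g2 g3 g4 A HAeq' Hb
     (fun s => proj1 (H1 s)) (fun s => proj2 (H1 s)) (fun s => proj1 (H2 s)) (fun s => proj2 (H2 s))
     (fun s => proj1 (H3 s)) (fun s => proj2 (H3 s)) (fun s => proj1 (H4 s)) (fun s => proj2 (H4 s))
     RhA R1 R2 R3 R4) as HL.
  destruct (HR _ HL HT) as [B HB].
  destruct (Tsm_unbounded phi Hnd hA g1 g2 g3 g4 A HAeq' Hb
     (fun s => proj1 (H1 s)) (fun s => proj2 (H1 s)) (fun s => proj1 (H2 s)) (fun s => proj2 (H2 s))
     (fun s => proj1 (H3 s)) (fun s => proj2 (H3 s)) (fun s => proj1 (H4 s)) (fun s => proj2 (H4 s))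
     w Hw B) as [m Hm].
  specialize (HB m). lra.
Qed.


End F.
Import F.

Theorem theorem6p9 (phi : forecasting_system) (w : path) :
  non_degenerate phi -> computable_fs phi ->
  (ML_random phi w <-> ML_test_random phi w).
Proof.
  intros Hnd Hc. split.
  - apply dir_ML_to_test; assumption.
  - apply dir_test_to_ML.
Qed.
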